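(* Let $\mathbb D\subset\mathbb C$ be a contractible open subset containing $0$. Let $\nu=\nu(z,w)$ and $s=s(z,w)$ be holomorphic functions on $\mathbb D\times\mathbb D$ satisfying $\nu_{zz}+\tfrac s2\nu=0$, with $\nu(0,0)=0$ and $\nu\not\equiv0$. Then the limit of $\mu=-\frac{2\nu_z}{\nu}$ as $(z,w)\to(0,0)$ exists, i.e. it is either a finite number or $\infty$. *)

(* Defs.v *)
From Stdlib Require Import Reals.
From Coquelicot Require Export Coquelicot.
Open Scope R_scope.

Definition contractible (D : C -> Prop) : Prop :=
  (exists z, D z) /\
  exists (H : R * C -> C) (c : C),
    (forall t z, 0 <= t <= 1 -> D z -> D (H (t, z))) /\
    (forall z, D z -> H (0, z) = z) /\
    (forall z, D z -> H (1, z) = c) /\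
    (forall t z, 0 <= t <= 1 -> D z ->
       filterlim H
         (within (fun q : R * C => 0 <= fst q <= 1 /\ D (snd q)) (locally (t, z)))
         (locally (H (t, z)))).

(* f : C^2 -> C is holomorphic on the open set U x V: complex (Frechet)
   differentiable, with a C-linear differential, at every point. *)
Definition holomorphic2 (U V : C -> Prop) (f : C * C -> C) : Prop :=
  forall p : C * C, U (fst p) -> V (snd p) ->
    ex_filterdiff (K := C_AbsRing)
      (U := prod_NormedModule C_AbsRing C_NormedModule C_NormedModule)
      (V := C_NormedModule) f (locally p).

Definition is_partial_z (f : C * C -> C) (p : C * C) (l : C) : Prop :=
  is_derive (K := C_AbsRing) (V := C_NormedModule)
    (fun z => f (z, snd p)) (fst p) l.

(* Main.v *)
Require Import Defs.
From Stdlib Require Import Reals Lra Lia FunctionalExtensionality Classical IndefiniteDescription.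
From Coquelicot Require Import Coquelicot.
Open Scope R_scope.

Lemma Cmod_le_abs (z : C) : Cmod z <= Rabs (Re z) + Rabs (Im z).
Proof.
  unfold Cmod, Re, Im. destruct z as [x y]; simpl.
  rewrite <- (sqrt_Rsqr (Rabs x + Rabs y)) by (pose proof (Rabs_pos x); pose proof (Rabs_pos y); lra).
  apply sqrt_le_1_alt. unfold Rsqr.
  pose proof (Rabs_pos x); pose proof (Rabs_pos y).
  assert (Hx : Rabs x * Rabs x = x * x) by (rewrite <- Rabs_mult; apply Rabs_pos_eq; nra).
  assert (Hy : Rabs y * Rabs y = y * y) by (rewrite <- Rabs_mult; apply Rabs_pos_eq; nra).
  simpl. nra.
Qed.

Lemma Re_le (z : C) : Rabs (Re z) <= Cmod z.
Proof. apply re_le_Cmod. Qed.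
Lemma Im_le (z : C) : Rabs (Im z) <= Cmod z.
Proof. unfold Cmod, Im. destruct z as [x y]; simpl.
  rewrite <- sqrt_Rsqr_abs. apply sqrt_le_1_alt. unfold Rsqr. nra. Qed.

Definition CD (f : C -> C) (z l : C) : Prop :=
  forall eps, 0 < eps -> exists del, 0 < del /\
    forall y, Cmod (y - z) < del -> Cmod (f y - f z - l * (y - z)) <= eps * Cmod (y - z).

Definition Ccont (f : C -> C) (z : C) : Prop :=
  forall eps, 0 < eps -> exists del, 0 < del /\
    forall y, Cmod (y - z) < del -> Cmod (f y - f z) < eps.

Lemma Cmod_tri3 (a b c : C) : Cmod (a + b + c) <= Cmod a + Cmod b + Cmod c.
Proof. eapply Rle_trans; [apply Cmod_triangle|]. pose proof (Cmod_triangle a b). lra. Qed.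

Lemma Cmod_sub_tri (a b : C) : Cmod a <= Cmod (a - b) + Cmod b.
Proof. replace a with (a - b + b)%C at 1 by ring. apply Cmod_triangle. Qed.

Lemma CD_cont f z l : CD f z l -> Ccont f z.
Proof.
  intros H eps Heps.
  destruct (H 1 Rlt_0_1) as [d [Hd Hy]].
  set (m := Rmin d (eps / (Cmod l + 2))).
  assert (Hm : 0 < m). { unfold m. apply Rmin_pos; auto. apply Rdiv_lt_0_compat; auto. pose proof (Cmod_ge_0 l); lra. }
  exists m; split; auto. intros y Hy'.
  assert (Hyd : Cmod (y - z) < d) by (eapply Rlt_le_trans; [exact Hy'|apply Rmin_l]).
  assert (Hye : Cmod (y - z) < eps / (Cmod l + 2)) by (eapply Rlt_le_trans; [exact Hy'|apply Rmin_r]).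
  specialize (Hy y Hyd).
  replace (f y - f z)%C with ((f y - f z - l * (y - z)) + l * (y - z))%C by ring.
  eapply Rle_lt_trans; [apply Cmod_triangle|]. rewrite Cmod_mult.
  pose proof (Cmod_ge_0 l). pose proof (Cmod_ge_0 (y - z)).
  assert (Cmod (y - z) * (Cmod l + 2) < eps).
  { apply Rmult_lt_reg_r with (/ (Cmod l + 2)). apply Rinv_0_lt_compat; lra.
    rewrite Rmult_assoc, Rinv_r by lra. rewrite Rmult_1_r. exact Hye. }
  nra.
Qed.

Lemma CD_line_re (F : C -> C) (p d : C) (t : R) (l : C) :
  CD F (p + RtoC t * d)%C l ->
  is_derive (fun s : R => Re (F (p + RtoC s * d)%C)) t (Re (d * l)).
Proof.
  intros H. apply is_derive_Reals. intros eps Heps.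
  set (e := eps / (2 * (Cmod d + 1))).
  assert (He : 0 < e). { unfold e. apply Rdiv_lt_0_compat; auto. pose proof (Cmod_ge_0 d); lra. }
  destruct (H e He) as [del [Hdel Hy]].
  assert (Hdd : 0 < del / (Cmod d + 1)). { apply Rdiv_lt_0_compat; auto. pose proof (Cmod_ge_0 d); lra. }
  exists (mkposreal _ Hdd). intros h Hh0 Hh. simpl in Hh.
  assert (Hyz : Cmod ((p + RtoC (t + h) * d) - (p + RtoC t * d))%C = Rabs h * Cmod d).
  { replace ((p + RtoC (t + h) * d) - (p + RtoC t * d))%C with (RtoC h * d)%C.
    rewrite Cmod_mult, Cmod_R; auto.
    unfold RtoC; apply injective_projections; simpl; ring. }
  assert (Hlt : Cmod ((p + RtoC (t + h) * d) - (p + RtoC t * d))%C < del).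
  { rewrite Hyz. pose proof (Cmod_ge_0 d). pose proof (Rabs_pos h).
    apply Rle_lt_trans with (Rabs h * (Cmod d + 1)). nra.
    apply Rmult_lt_reg_r with (/ (Cmod d + 1)). apply Rinv_0_lt_compat; lra.
    rewrite Rmult_assoc, Rinv_r by lra. rewrite Rmult_1_r. exact Hh. }
  specialize (Hy _ Hlt). rewrite Hyz in Hy.
  set (u := (F (p + RtoC (t + h) * d) - F (p + RtoC t * d) - l * ((p + RtoC (t + h) * d) - (p + RtoC t * d)))%C) in *.
  assert (Hre : Re (F (p + RtoC (t + h) * d)%C) - Re (F (p + RtoC t * d)%C) = Re u + h * Re (d * l)).
  { unfold u. unfold Re at 3 4. simpl. unfold Re. simpl. ring. }
  rewrite Hre.
  replace ((Re u + h * Re (d * l)) / h - Re (d * l)) with (Re u / h) by (field; auto).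
  unfold Rdiv. rewrite Rabs_mult, Rabs_inv.
  pose proof (Re_le u). pose proof (Cmod_ge_0 d).
  assert (Hhp : 0 < Rabs h) by (apply Rabs_pos_lt; auto).
  apply Rle_lt_trans with (e * Cmod d).
  { apply Rmult_le_reg_r with (Rabs h); auto. rewrite Rmult_assoc, Rinv_l by lra. nra. }
  unfold e. apply Rle_lt_trans with (eps / 2).
  { unfold Rdiv. rewrite Rinv_mult. apply Rle_trans with (eps * / 2 * (Cmod d * / (Cmod d + 1))).
    right; ring. rewrite <- (Rmult_1_r (eps * / 2)) at 2. apply Rmult_le_compat_l. lra.
    apply Rmult_le_reg_r with (Cmod d + 1). lra. rewrite Rmult_assoc, Rinv_l by lra. lra. }
  lra.
Qed.

Definition Rcont (g : R -> C) (x : R) : Prop :=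
  forall eps, 0 < eps -> exists del, 0 < del /\
    forall y, Rabs (y - x) < del -> Cmod (g y - g x) < eps.

Lemma Rcont_re g x : Rcont g x -> continuous (fun t => Re (g t)) x.
Proof.
  intros H. apply filterlim_locally. intros eps.
  destruct (H eps (cond_pos eps)) as [d [Hd Hy]].
  exists (mkposreal d Hd). intros y Hy'. change (Rabs (Re (g y) - Re (g x)) < eps).
  specialize (Hy y Hy'). eapply Rle_lt_trans; [|exact Hy].
  replace (Re (g y) - Re (g x)) with (Re (g y - g x)%C) by (unfold Re; simpl; ring).
  apply Re_le.
Qed.

Lemma Rcont_im g x : Rcont g x -> continuous (fun t => Im (g t)) x.
Proof.
  intros H. apply filterlim_locally. intros eps.
  destruct (H eps (cond_pos eps)) as [d [Hd Hy]].
  exists (mkposreal d Hd). intros y Hy'. change (Rabs (Im (g y) - Im (g x)) < eps).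
  specialize (Hy y Hy'). eapply Rle_lt_trans; [|exact Hy].
  replace (Im (g y) - Im (g x)) with (Im (g y - g x)%C) by (unfold Im; simpl; ring).
  apply Im_le.
Qed.


Lemma RInt_plusR (f g : R -> R) a b : ex_RInt f a b -> ex_RInt g a b ->
  RInt (fun x => f x + g x) a b = RInt f a b + RInt g a b.
Proof. intros. apply (RInt_plus (V:=R_CompleteNormedModule)); auto. Qed.
Lemma RInt_minusR (f g : R -> R) a b : ex_RInt f a b -> ex_RInt g a b ->
  RInt (fun x => f x - g x) a b = RInt f a b - RInt g a b.
Proof. intros. apply (RInt_minus (V:=R_CompleteNormedModule)); auto. Qed.
Lemma RInt_scalR (f : R -> R) a b (r : R) : ex_RInt f a b ->
  RInt (fun x => r * f x) a b = r * RInt f a b.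
Proof. intros. apply (RInt_scal (V:=R_CompleteNormedModule)); auto. Qed.
Lemma ex_RInt_plusR (f g : R -> R) a b : ex_RInt f a b -> ex_RInt g a b -> ex_RInt (fun x => f x + g x) a b.
Proof. intros. apply (ex_RInt_plus (V:=R_CompleteNormedModule)); auto. Qed.
Lemma ex_RInt_scalR (f : R -> R) a b r : ex_RInt f a b -> ex_RInt (fun x => r * f x) a b.
Proof. intros. apply (ex_RInt_scal (V:=R_CompleteNormedModule)); auto. Qed.

Definition CInt (g : R -> C) (a b : R) : C :=
  (RInt (fun t => Re (g t)) a b, RInt (fun t => Im (g t)) a b).

Definition CIok (g : R -> C) (a b : R) : Prop :=
  forall t, Rmin a b <= t <= Rmax a b -> Rcont g t.

Lemma CIok_re g a b : CIok g a b -> ex_RInt (fun t => Re (g t)) a b.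
Proof. intros H. apply (ex_RInt_continuous (V:=R_CompleteNormedModule)). intros z Hz. apply Rcont_re, H, Hz. Qed.
Lemma CIok_im g a b : CIok g a b -> ex_RInt (fun t => Im (g t)) a b.
Proof. intros H. apply (ex_RInt_continuous (V:=R_CompleteNormedModule)). intros z Hz. apply Rcont_im, H, Hz. Qed.

Lemma CInt_ext g h a b : (forall t, Rmin a b <= t <= Rmax a b -> g t = h t) -> CInt g a b = CInt h a b.
Proof.
  intros H. unfold CInt. f_equal; apply RInt_ext; intros x Hx; rewrite H; auto; lra.
Qed.

Lemma CInt_plus g h a b : CIok g a b -> CIok h a b ->
  CInt (fun t => g t + h t)%C a b = (CInt g a b + CInt h a b)%C.
Proof.
  intros Hg Hh. unfold CInt. unfold Cplus. apply injective_projections; cbn [fst snd].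
  - rewrite <- RInt_plusR by (apply CIok_re; auto). apply RInt_ext. intros; reflexivity.
  - rewrite <- RInt_plusR by (apply CIok_im; auto). apply RInt_ext. intros; reflexivity.
Qed.

Lemma CInt_scal_re g a b (r : R) : CIok g a b ->
  RInt (fun t => r * Re (g t)) a b = r * RInt (fun t => Re (g t)) a b.
Proof. intros H. apply (RInt_scal (V:=R_CompleteNormedModule)). apply CIok_re; auto. Qed.
Lemma CInt_scal_im g a b (r : R) : CIok g a b ->
  RInt (fun t => r * Im (g t)) a b = r * RInt (fun t => Im (g t)) a b.
Proof. intros H. apply (RInt_scal (V:=R_CompleteNormedModule)). apply CIok_im; auto. Qed.

Lemma CInt_Cmult g a b (c : C) : CIok g a b ->
  CInt (fun t => c * g t)%C a b = (c * CInt g a b)%C.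
Proof.
  intros Hg. unfold CInt. destruct c as [c1 c2].
  pose proof (CIok_re _ _ _ Hg). pose proof (CIok_im _ _ _ Hg).
  unfold Cmult. apply injective_projections; cbn [fst snd].
  - transitivity (RInt (fun t => c1 * Re (g t) - c2 * Im (g t)) a b).
    apply RInt_ext. intros. unfold Re, Im; simpl. ring.
    rewrite RInt_minusR, !RInt_scalR; auto; apply ex_RInt_scalR; auto.
  - transitivity (RInt (fun t => c1 * Im (g t) + c2 * Re (g t)) a b).
    apply RInt_ext. intros. unfold Re, Im; simpl. ring.
    rewrite RInt_plusR, !RInt_scalR; auto; apply ex_RInt_scalR; auto.
Qed.

Lemma CInt_Chasles g a b c : CIok g a b -> CIok g b c ->
  (CInt g a b + CInt g b c)%C = CInt g a c.
Proof.
  intros H1 H2. unfold CInt, Cplus. apply injective_projections; cbn [fst snd].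
  - apply (RInt_Chasles (V:=R_CompleteNormedModule)); apply CIok_re; auto.
  - apply (RInt_Chasles (V:=R_CompleteNormedModule)); apply CIok_im; auto.
Qed.

Lemma CInt_bound g a b M : a <= b -> CIok g a b ->
  (forall t, a <= t <= b -> Cmod (g t) <= M) -> Cmod (CInt g a b) <= 2 * ((b - a) * M).
Proof.
  intros Hab Hg HM. eapply Rle_trans; [apply Cmod_le_abs|]. unfold CInt, Re, Im; simpl.
  assert (A1 : Rabs (RInt (fun t => Re (g t)) a b) <= (b - a) * M).
  { apply abs_RInt_le_const; auto. apply CIok_re; auto. intros t Ht. eapply Rle_trans; [apply Re_le|]. apply HM; auto. }
  assert (A2 : Rabs (RInt (fun t => Im (g t)) a b) <= (b - a) * M).
  { apply abs_RInt_le_const; auto. apply CIok_im; auto. intros t Ht. eapply Rle_trans; [apply Im_le|]. apply HM; auto. }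
  unfold Re, Im in A1, A2. lra.
Qed.

Lemma CInt_FTC (G g : R -> C) a b : a <= b ->
  (forall t, a <= t <= b -> is_derive (fun s => Re (G s)) t (Re (g t)) /\
                            is_derive (fun s => Im (G s)) t (Im (g t))) ->
  CIok g a b -> CInt g a b = (G b - G a)%C.
Proof.
  intros Hab HD Hg. unfold CInt, Cminus, Cplus, Copp.
  apply injective_projections; cbn [fst snd].
  - apply (is_RInt_unique (V:=R_CompleteNormedModule)).
    apply (is_RInt_derive (V:=R_CompleteNormedModule) (fun s => Re (G s))).
    + intros x Hx. rewrite Rmin_left, Rmax_right in Hx by auto. apply HD; auto.
    + intros x Hx. rewrite Rmin_left, Rmax_right in Hx by auto. apply Rcont_re, Hg. rewrite Rmin_left, Rmax_right by auto; auto.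
  - apply (is_RInt_unique (V:=R_CompleteNormedModule)).
    apply (is_RInt_derive (V:=R_CompleteNormedModule) (fun s => Im (G s))).
    + intros x Hx. rewrite Rmin_left, Rmax_right in Hx by auto. apply HD; auto.
    + intros x Hx. rewrite Rmin_left, Rmax_right in Hx by auto. apply Rcont_im, Hg. rewrite Rmin_left, Rmax_right by auto; auto.
Qed.

Lemma Cmod_pos_lt (z : C) : z <> 0%C -> 0 < Cmod z.
Proof. apply Cmod_gt_0. Qed.

Lemma CD_ext f g z l : (forall y, f y = g y) -> CD f z l -> CD g z l.
Proof. intros E H eps He. destruct (H eps He) as [d [Hd Hy]]. exists d; split; auto.
  intros y Hy'. rewrite <- !E. auto. Qed.

Lemma CD_const c z : CD (fun _ => c) z 0.
Proof. intros eps He. exists 1; split; [lra|]. intros y _.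
  replace (c - c - 0 * (y - z))%C with (RtoC 0) by ring. rewrite Cmod_0.
  pose proof (Cmod_ge_0 (y - z)). nra. Qed.

Lemma CD_id z : CD (fun y => y) z 1.
Proof. intros eps He. exists 1; split; [lra|]. intros y _.
  replace (y - z - 1 * (y - z))%C with (RtoC 0) by ring. rewrite Cmod_0.
  pose proof (Cmod_ge_0 (y - z)). nra. Qed.

Lemma CD_plus f g z lf lg : CD f z lf -> CD g z lg -> CD (fun y => f y + g y)%C z (lf + lg).
Proof.
  intros Hf Hg eps He.
  destruct (Hf (eps/2)) as [d1 [Hd1 H1]]; [lra|].
  destruct (Hg (eps/2)) as [d2 [Hd2 H2]]; [lra|].
  exists (Rmin d1 d2); split; [apply Rmin_pos; auto|]. intros y Hy.
  assert (Hy1 : Cmod (y - z) < d1) by (eapply Rlt_le_trans; [exact Hy|apply Rmin_l]).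
  assert (Hy2 : Cmod (y - z) < d2) by (eapply Rlt_le_trans; [exact Hy|apply Rmin_r]).
  specialize (H1 y Hy1). specialize (H2 y Hy2).
  replace (f y + g y - (f z + g z) - (lf + lg) * (y - z))%C with
    ((f y - f z - lf * (y - z)) + (g y - g z - lg * (y - z)))%C by ring.
  eapply Rle_trans; [apply Cmod_triangle|]. lra.
Qed.

Lemma CD_scal f z l c : CD f z l -> CD (fun y => c * f y)%C z (c * l).
Proof.
  intros Hf eps He.
  destruct (Hf (eps / (Cmod c + 1))) as [d [Hd H]].
  { apply Rdiv_lt_0_compat; auto. pose proof (Cmod_ge_0 c); lra. }
  exists d; split; auto. intros y Hy. specialize (H y Hy).
  replace (c * f y - c * f z - c * l * (y - z))%C with (c * (f y - f z - l * (y - z)))%C by ring.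
  rewrite Cmod_mult. pose proof (Cmod_ge_0 c). pose proof (Cmod_ge_0 (y - z)).
  pose proof (Cmod_ge_0 (f y - f z - l * (y - z))).
  apply Rle_trans with ((Cmod c + 1) * (eps / (Cmod c + 1) * Cmod (y - z))).
  { apply Rle_trans with ((Cmod c + 1) * Cmod (f y - f z - l * (y - z))). nra.
    apply Rmult_le_compat_l; lra. }
  right. field. lra.
Qed.

Lemma CD_mult f g z lf lg : CD f z lf -> CD g z lg ->
  CD (fun y => f y * g y)%C z (lf * g z + f z * lg).
Proof.
  intros Hf Hg eps He.
  pose proof (Cmod_ge_0 (g z)) as Pg. pose proof (Cmod_ge_0 (f z)) as Pf. pose proof (Cmod_ge_0 lf) as Pl.
  destruct (Hf (eps / (3 * (Cmod (g z) + 1)))) as [d1 [Hd1 H1]].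
  { apply Rdiv_lt_0_compat; lra. }
  destruct (Hg (eps / (3 * (Cmod (f z) + 1)))) as [d2 [Hd2 H2]].
  { apply Rdiv_lt_0_compat; lra. }
  destruct (CD_cont _ _ _ Hg (Rmin 1 (eps / (3 * (Cmod lf + 1))))) as [d3 [Hd3 H3]].
  { apply Rmin_pos; [lra|]. apply Rdiv_lt_0_compat; lra. }
  exists (Rmin d1 (Rmin d2 d3)); split; [repeat apply Rmin_pos; auto|]. intros y Hy.
  assert (Hy1 : Cmod (y - z) < d1) by (eapply Rlt_le_trans; [exact Hy|apply Rmin_l]).
  assert (Hy2 : Cmod (y - z) < d2) by (eapply Rlt_le_trans; [exact Hy|eapply Rle_trans; [apply Rmin_r|apply Rmin_l]]).
  assert (Hy3 : Cmod (y - z) < d3) by (eapply Rlt_le_trans; [exact Hy|eapply Rle_trans; [apply Rmin_r|apply Rmin_r]]).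
  specialize (H1 y Hy1). specialize (H2 y Hy2). specialize (H3 y Hy3).
  assert (H3a : Cmod (g y - g z) < 1) by (eapply Rlt_le_trans; [exact H3|apply Rmin_l]).
  assert (H3b : Cmod (g y - g z) < eps / (3 * (Cmod lf + 1))) by (eapply Rlt_le_trans; [exact H3|apply Rmin_r]).
  replace (f y * g y - f z * g z - (lf * g z + f z * lg) * (y - z))%C with
    ((f y - f z - lf * (y - z)) * g y + f z * (g y - g z - lg * (y - z)) + lf * (y - z) * (g y - g z))%C by ring.
  eapply Rle_trans; [apply Cmod_tri3|]. rewrite !Cmod_mult.
  pose proof (Cmod_ge_0 (y - z)) as Pu. set (u := Cmod (y - z)) in *.
  assert (Hgy : Cmod (g y) <= Cmod (g z) + 1).
  { pose proof (Cmod_sub_tri (g y) (g z)). lra. }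
  assert (A1 : Cmod (f y - f z - lf * (y - z)) * Cmod (g y) <= eps / 3 * u).
  { apply Rle_trans with (eps / (3 * (Cmod (g z) + 1)) * u * (Cmod (g z) + 1)).
    apply Rmult_le_compat; auto using Cmod_ge_0.
    right. field. lra. }
  assert (A2 : Cmod (f z) * Cmod (g y - g z - lg * (y - z)) <= eps / 3 * u).
  { apply Rle_trans with ((Cmod (f z) + 1) * (eps / (3 * (Cmod (f z) + 1)) * u)).
    apply Rmult_le_compat; auto using Cmod_ge_0; lra.
    right. field. lra. }
  assert (A3 : Cmod lf * u * Cmod (g y - g z) <= eps / 3 * u).
  { apply Rle_trans with ((Cmod lf + 1) * u * (eps / (3 * (Cmod lf + 1)))).
    apply Rmult_le_compat; auto using Cmod_ge_0. nra. apply Rmult_le_compat_r; lra. lra.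
    right. field. lra. }
  lra.
Qed.

Lemma CD_inv g z lg : CD g z lg -> g z <> 0%C ->
  CD (fun y => / g y)%C z (- lg / (g z * g z)).
Proof.
  intros Hg Hz eps He.
  pose proof (Cmod_pos_lt _ Hz) as Hgz. set (m := Cmod (g z)) in *.
  pose proof (Cmod_ge_0 lg) as Pl.
  destruct (Hg (eps * (m * m) / 4)) as [d1 [Hd1 H1]].
  { apply Rdiv_lt_0_compat; [|lra]. apply Rmult_lt_0_compat; nra. }
  destruct (CD_cont _ _ _ Hg (Rmin (m / 2) (eps * (m * m * m) / (4 * (Cmod lg + 1))))) as [d3 [Hd3 H3]].
  { apply Rmin_pos; [lra|]. apply Rdiv_lt_0_compat; [|lra]. apply Rmult_lt_0_compat; [lra|]. repeat apply Rmult_lt_0_compat; lra. }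
  exists (Rmin d1 d3); split; [apply Rmin_pos; auto|]. intros y Hy.
  assert (Hy1 : Cmod (y - z) < d1) by (eapply Rlt_le_trans; [exact Hy|apply Rmin_l]).
  assert (Hy3 : Cmod (y - z) < d3) by (eapply Rlt_le_trans; [exact Hy|apply Rmin_r]).
  specialize (H1 y Hy1). specialize (H3 y Hy3).
  assert (H3a : Cmod (g y - g z) < m / 2) by (eapply Rlt_le_trans; [exact H3|apply Rmin_l]).
  assert (H3b : Cmod (g y - g z) < eps * (m * m * m) / (4 * (Cmod lg + 1))) by (eapply Rlt_le_trans; [exact H3|apply Rmin_r]).
  assert (Hgy : m / 2 <= Cmod (g y)).
  { pose proof (Cmod_sub_tri (g z) (g y)). replace (g z - g y)%C with (- (g y - g z))%C in H by ring.
    rewrite Cmod_opp in H. fold m in H. lra. }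
  assert (Hgy0 : g y <> 0%C). { intro E. rewrite E, Cmod_0 in Hgy. lra. }
  replace (/ g y - / g z - - lg / (g z * g z) * (y - z))%C with
    (- (g y - g z - lg * (y - z)) * / (g y * g z) + lg * (y - z) * (g y - g z) * / (g y * (g z * g z)))%C
    by (field; auto).
  eapply Rle_trans; [apply Cmod_triangle|]. rewrite !Cmod_mult, Cmod_opp.
  rewrite !Cmod_inv by (repeat apply Cmult_neq_0; auto).
  rewrite !Cmod_mult. fold m.
  pose proof (Cmod_ge_0 (y - z)) as Pu. set (u := Cmod (y - z)) in *.
  set (gy := Cmod (g y)) in *.
  assert (Hpos : 0 < gy) by lra.
  assert (A1 : Cmod (g y - g z - lg * (y - z)) * / (gy * m) <= eps / 2 * u).
  { apply Rle_trans with (eps * (m * m) / 4 * u * / (m / 2 * m)).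
    apply Rmult_le_compat; auto using Cmod_ge_0. left; apply Rinv_0_lt_compat; nra.
    apply Rinv_le_contravar; nra.
    right. field. lra. }
  assert (A2 : Cmod lg * u * Cmod (g y - g z) * / (gy * (m * m)) <= eps / 2 * u).
  { apply Rle_trans with ((Cmod lg + 1) * u * (eps * (m * m * m) / (4 * (Cmod lg + 1))) * / (m / 2 * (m * m))).
    apply Rmult_le_compat.
    - repeat apply Rmult_le_pos; auto using Cmod_ge_0.
    - left; apply Rinv_0_lt_compat; apply Rmult_lt_0_compat; [lra|]; apply Rmult_lt_0_compat; lra.
    - apply Rmult_le_compat; [apply Rmult_le_pos; auto using Cmod_ge_0 | apply Cmod_ge_0 | apply Rmult_le_compat_r; lra | lra].
    - apply Rinv_le_contravar; [repeat apply Rmult_lt_0_compat; lra|]. apply Rmult_le_compat_r; [apply Rmult_le_pos; lra|lra].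
    right. field. lra. }
  lra.
Qed.

Lemma CD_line_im (F : C -> C) (p d : C) (t : R) (l : C) :
  CD F (p + RtoC t * d)%C l ->
  is_derive (fun s : R => Im (F (p + RtoC s * d)%C)) t (Im (d * l)).
Proof.
  intros H. pose proof (CD_scal _ _ _ (0, -1)%R H) as H2.
  pose proof (CD_line_re _ p d t _ H2) as H3.
  replace (Im (d * l)) with (Re (d * ((0, -1)%R * l)))%C by (unfold Re, Im, Cmult; simpl; ring).
  eapply is_derive_ext; [|exact H3]. intros s. unfold Re, Im, Cmult; simpl. ring.
Qed.

Lemma CD_line (F : C -> C) (p d : C) (t : R) (l : C) :
  CD F (p + RtoC t * d)%C l ->
  is_derive (fun s : R => Re (F (p + RtoC s * d)%C)) t (Re (d * l)) /\
  is_derive (fun s : R => Im (F (p + RtoC s * d)%C)) t (Im (d * l)).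
Proof. intros H. split; [apply CD_line_re|apply CD_line_im]; auto. Qed.

Lemma Ccont_line (f : C -> C) (p d : C) (t : R) :
  Ccont f (p + RtoC t * d)%C -> Rcont (fun s => f (p + RtoC s * d)%C) t.
Proof.
  intros H eps He. destruct (H eps He) as [del [Hd Hy]].
  exists (del / (Cmod d + 1)). split.
  { apply Rdiv_lt_0_compat; auto. pose proof (Cmod_ge_0 d); lra. }
  intros y Hy'. apply Hy.
  replace ((p + RtoC y * d) - (p + RtoC t * d))%C with (RtoC (y - t) * d)%C
    by (unfold RtoC, Cmult, Cplus, Cminus, Copp; apply injective_projections; simpl; ring).
  rewrite Cmod_mult, Cmod_R. pose proof (Cmod_ge_0 d). pose proof (Rabs_pos (y - t)).
  apply Rle_lt_trans with (Rabs (y - t) * (Cmod d + 1)). nra.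
  apply Rmult_lt_reg_r with (/ (Cmod d + 1)). apply Rinv_0_lt_compat; lra.
  rewrite Rmult_assoc, Rinv_r by lra. rewrite Rmult_1_r. exact Hy'.
Qed.

Lemma CD_hor F x y l : CD F (x, y) l ->
  is_derive (fun s => Re (F (s, y))) x (Re l) /\ is_derive (fun s => Im (F (s, y))) x (Im l).
Proof.
  intros H.
  assert (E : forall s : R, ((0, y) + RtoC s * 1)%C = (s, y)).
  { intros s. unfold RtoC, Cmult, Cplus; apply injective_projections; simpl; ring. }
  assert (H' : CD F ((0, y) + RtoC x * 1)%C l) by (rewrite E; auto).
  destruct (CD_line F (0, y) 1 x l H') as [A B]. split.
  - eapply is_derive_ext; [|replace (Re l) with (Re (1 * l)); [exact A|]].
    intros s; cbv beta; rewrite E; auto. f_equal; ring.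
  - eapply is_derive_ext; [|replace (Im l) with (Im (1 * l)); [exact B|]].
    intros s; cbv beta; rewrite E; auto. f_equal; ring.
Qed.

Lemma CD_ver F x y l : CD F (x, y) l ->
  is_derive (fun s => Re (F (x, s))) y (Re (Ci * l)) /\ is_derive (fun s => Im (F (x, s))) y (Im (Ci * l)).
Proof.
  intros H.
  assert (E : forall s : R, ((x, 0) + RtoC s * Ci)%C = (x, s)).
  { intros s. unfold RtoC, Ci, Cmult, Cplus; apply injective_projections; simpl; ring. }
  assert (H' : CD F ((x, 0) + RtoC y * Ci)%C l) by (rewrite E; auto).
  destruct (CD_line F (x, 0) Ci y l H') as [A B]. split.
  - eapply is_derive_ext; [|exact A]. intros s; cbv beta; rewrite E; auto.
  - eapply is_derive_ext; [|exact B]. intros s; cbv beta; rewrite E; auto.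
Qed.

Lemma Ccont_hor f x y : Ccont f (x, y) -> Rcont (fun s => f (s, y)) x.
Proof.
  intros H.
  assert (E : forall s : R, ((0, y) + RtoC s * 1)%C = (s, y)).
  { intros s. unfold RtoC, Cmult, Cplus; apply injective_projections; simpl; ring. }
  assert (H' : Ccont f ((0, y) + RtoC x * 1)%C) by (rewrite E; auto).
  pose proof (Ccont_line f _ _ _ H') as A.
  intros eps He. destruct (A eps He) as [d [Hd Hy]]. exists d; split; auto.
  intros s Hs. specialize (Hy s Hs). rewrite !E in Hy. auto.
Qed.

Lemma Ccont_ver f x y : Ccont f (x, y) -> Rcont (fun s => f (x, s)) y.
Proof.
  intros H.
  assert (E : forall s : R, ((x, 0) + RtoC s * Ci)%C = (x, s)).
  { intros s. unfold RtoC, Ci, Cmult, Cplus; apply injective_projections; simpl; ring. }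
  assert (H' : Ccont f ((x, 0) + RtoC y * Ci)%C) by (rewrite E; auto).
  pose proof (Ccont_line f _ _ _ H') as A.
  intros eps He. destruct (A eps He) as [d [Hd Hy]]. exists d; split; auto.
  intros s Hs. specialize (Hy s Hs). rewrite !E in Hy. auto.
Qed.

Definition Hint (f : C -> C) (y a b : R) : C := CInt (fun x => f (x, y)) a b.
Definition Vint (f : C -> C) (x a b : R) : C := CInt (fun y => f (x, y)) a b.

Definition Rect (f : C -> C) (x0 x1 y0 y1 : R) : C :=
  (Hint f y0 x0 x1 + Ci * Vint f x1 y0 y1 - Hint f y1 x0 x1 - Ci * Vint f x0 y0 y1)%C.

Definition EdgeOK (f : C -> C) (x0 x1 y0 y1 : R) : Prop :=
  (forall x, x0 <= x <= x1 -> Ccont f (x, y0) /\ Ccont f (x, y1)) /\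
  (forall y, y0 <= y <= y1 -> Ccont f (x0, y) /\ Ccont f (x1, y)).

Definition RectOK (f : C -> C) (x0 x1 y0 y1 : R) : Prop :=
  forall x y, x0 <= x <= x1 -> y0 <= y <= y1 -> Ccont f (x, y).

Lemma RectOK_Edge f x0 x1 y0 y1 : x0 <= x1 -> y0 <= y1 -> RectOK f x0 x1 y0 y1 -> EdgeOK f x0 x1 y0 y1.
Proof. intros Hx Hy H. split; intros; split; apply H; lra. Qed.

Lemma hor_ok f y a b : a <= b -> (forall x, a <= x <= b -> Ccont f (x, y)) -> CIok (fun x => f (x, y)) a b.
Proof. intros Hab H t Ht. rewrite Rmin_left, Rmax_right in Ht by auto. apply Ccont_hor, H; auto. Qed.
Lemma ver_ok f x a b : a <= b -> (forall y, a <= y <= b -> Ccont f (x, y)) -> CIok (fun y => f (x, y)) a b.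
Proof. intros Hab H t Ht. rewrite Rmin_left, Rmax_right in Ht by auto. apply Ccont_ver, H; auto. Qed.

Lemma Rect_plus f g x0 x1 y0 y1 : x0 <= x1 -> y0 <= y1 -> EdgeOK f x0 x1 y0 y1 -> EdgeOK g x0 x1 y0 y1 ->
  Rect (fun z => f z + g z)%C x0 x1 y0 y1 = (Rect f x0 x1 y0 y1 + Rect g x0 x1 y0 y1)%C.
Proof.
  intros Hx Hy [Hf1 Hf2] [Hg1 Hg2]. unfold Rect, Hint, Vint.
  rewrite !(CInt_plus (fun x => f (x, _)) (fun x => g (x, _))).
  rewrite !(CInt_plus (fun y => f (_, y)) (fun y => g (_, y))).
  ring.
  all: first [apply hor_ok | apply ver_ok]; auto; intros; first [apply Hf1|apply Hf2|apply Hg1|apply Hg2]; auto.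
Qed.

Lemma Rect_Cmult f c x0 x1 y0 y1 : x0 <= x1 -> y0 <= y1 -> EdgeOK f x0 x1 y0 y1 ->
  Rect (fun z => c * f z)%C x0 x1 y0 y1 = (c * Rect f x0 x1 y0 y1)%C.
Proof.
  intros Hx Hy [Hf1 Hf2]. unfold Rect, Hint, Vint.
  rewrite !(CInt_Cmult (fun x => f (x, _))).
  rewrite !(CInt_Cmult (fun y => f (_, y))).
  ring.
  all: first [apply hor_ok | apply ver_ok]; auto; intros; first [apply Hf1|apply Hf2]; auto.
Qed.

Lemma Rect_ext f g x0 x1 y0 y1 : x0 <= x1 -> y0 <= y1 ->
  (forall x, x0 <= x <= x1 -> f (x, y0) = g (x, y0) /\ f (x, y1) = g (x, y1)) ->
  (forall y, y0 <= y <= y1 -> f (x0, y) = g (x0, y) /\ f (x1, y) = g (x1, y)) ->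
  Rect f x0 x1 y0 y1 = Rect g x0 x1 y0 y1.
Proof.
  intros Hx Hy H1 H2. unfold Rect, Hint, Vint.
  rewrite (CInt_ext (fun x => f (x, y0)) (fun x => g (x, y0))),
          (CInt_ext (fun x => f (x, y1)) (fun x => g (x, y1))),
          (CInt_ext (fun y => f (x0, y)) (fun y => g (x0, y))),
          (CInt_ext (fun y => f (x1, y)) (fun y => g (x1, y))); auto;
  intros t Ht; rewrite ?Rmin_left, ?Rmax_right in Ht by auto;
  first [apply H1|apply H2]; auto.
Qed.

Lemma Rect_splitx f x0 xm x1 y0 y1 : x0 <= xm -> xm <= x1 -> y0 <= y1 -> RectOK f x0 x1 y0 y1 ->
  Rect f x0 x1 y0 y1 = (Rect f x0 xm y0 y1 + Rect f xm x1 y0 y1)%C.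
Proof.
  intros H1 H2 Hy Hf. unfold Rect, Hint.
  rewrite <- (CInt_Chasles (fun x => f (x, y0)) x0 xm x1), <- (CInt_Chasles (fun x => f (x, y1)) x0 xm x1).
  ring.
  all: apply hor_ok; auto; intros; apply Hf; lra.
Qed.

Lemma Rect_splity f x0 x1 y0 ym y1 : y0 <= ym -> ym <= y1 -> x0 <= x1 -> RectOK f x0 x1 y0 y1 ->
  Rect f x0 x1 y0 y1 = (Rect f x0 x1 y0 ym + Rect f x0 x1 ym y1)%C.
Proof.
  intros H1 H2 Hx Hf. unfold Rect, Vint.
  rewrite <- (CInt_Chasles (fun y => f (x0, y)) y0 ym y1), <- (CInt_Chasles (fun y => f (x1, y)) y0 ym y1).
  ring.
  all: apply ver_ok; auto; intros; apply Hf; lra.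
Qed.

Lemma Cmod_Ci_mult z : Cmod (Ci * z) = Cmod z.
Proof. rewrite Cmod_mult. replace (Cmod Ci) with 1. ring. unfold Cmod, Ci. cbn [fst snd]. replace (0 ^ 2 + 1 ^ 2) with 1 by ring. symmetry; apply sqrt_1. Qed.

Lemma Rect_bound f x0 x1 y0 y1 M : x0 <= x1 -> y0 <= y1 -> EdgeOK f x0 x1 y0 y1 ->
  (forall x, x0 <= x <= x1 -> Cmod (f (x, y0)) <= M /\ Cmod (f (x, y1)) <= M) ->
  (forall y, y0 <= y <= y1 -> Cmod (f (x0, y)) <= M /\ Cmod (f (x1, y)) <= M) ->
  Cmod (Rect f x0 x1 y0 y1) <= 4 * ((x1 - x0) + (y1 - y0)) * M.
Proof.
  intros Hx Hy [Hf1 Hf2] HM1 HM2. unfold Rect.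
  assert (A1 : Cmod (Hint f y0 x0 x1) <= 2 * ((x1 - x0) * M)).
  { apply CInt_bound; auto. apply hor_ok; auto. intros; apply Hf1; auto. intros; apply HM1; auto. }
  assert (A2 : Cmod (Hint f y1 x0 x1) <= 2 * ((x1 - x0) * M)).
  { apply CInt_bound; auto. apply hor_ok; auto. intros; apply Hf1; auto. intros; apply HM1; auto. }
  assert (A3 : Cmod (Vint f x0 y0 y1) <= 2 * ((y1 - y0) * M)).
  { apply CInt_bound; auto. apply ver_ok; auto. intros; apply Hf2; auto. intros; apply HM2; auto. }
  assert (A4 : Cmod (Vint f x1 y0 y1) <= 2 * ((y1 - y0) * M)).
  { apply CInt_bound; auto. apply ver_ok; auto. intros; apply Hf2; auto. intros; apply HM2; auto. }
  rewrite <- (Cmod_Ci_mult (Vint f x0 y0 y1)) in A3.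
  rewrite <- (Cmod_Ci_mult (Vint f x1 y0 y1)) in A4.
  set (a := Hint f y0 x0 x1) in *. set (b := (Ci * Vint f x1 y0 y1)%C) in *.
  set (c := Hint f y1 x0 x1) in *. set (d := (Ci * Vint f x0 y0 y1)%C) in *.
  replace (a + b - c - d)%C with (a + b + (- c) + (- d))%C by ring.
  eapply Rle_trans; [apply Cmod_triangle|]. rewrite Cmod_opp.
  eapply Rle_trans; [apply Rplus_le_compat_r; apply Cmod_tri3|]. rewrite Cmod_opp. lra.
Qed.

Lemma Ccont_scal c f z : Ccont f z -> Ccont (fun y => c * f y)%C z.
Proof.
  intros H eps He. destruct (H (eps / (Cmod c + 1))) as [d [Hd Hy]].
  { apply Rdiv_lt_0_compat; auto. pose proof (Cmod_ge_0 c); lra. }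
  exists d; split; auto. intros y Hy'. specialize (Hy y Hy').
  replace (c * f y - c * f z)%C with (c * (f y - f z))%C by ring. rewrite Cmod_mult.
  pose proof (Cmod_ge_0 c). pose proof (Cmod_ge_0 (f y - f z)).
  apply Rle_lt_trans with ((Cmod c + 1) * Cmod (f y - f z)). nra.
  apply Rlt_le_trans with ((Cmod c + 1) * (eps / (Cmod c + 1))).
  apply Rmult_lt_compat_l; lra. right; field; lra.
Qed.

Lemma Rect_FTC (F f : C -> C) x0 x1 y0 y1 : x0 <= x1 -> y0 <= y1 -> EdgeOK f x0 x1 y0 y1 ->
  (forall x, x0 <= x <= x1 -> CD F (x, y0) (f (x, y0)) /\ CD F (x, y1) (f (x, y1))) ->
  (forall y, y0 <= y <= y1 -> CD F (x0, y) (f (x0, y)) /\ CD F (x1, y) (f (x1, y))) ->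
  Rect f x0 x1 y0 y1 = RtoC 0.
Proof.
  intros Hx Hy [Hf1 Hf2] HD1 HD2. unfold Rect, Hint, Vint.
  assert (E1 : CInt (fun x => f (x, y0)) x0 x1 = (F (x1, y0) - F (x0, y0))%C).
  { apply (CInt_FTC (fun x => F (x, y0))); auto. intros t Ht; apply CD_hor, HD1; auto.
    apply hor_ok; auto; intros; apply Hf1; auto. }
  assert (E2 : CInt (fun x => f (x, y1)) x0 x1 = (F (x1, y1) - F (x0, y1))%C).
  { apply (CInt_FTC (fun x => F (x, y1))); auto. intros t Ht; apply CD_hor, HD1; auto.
    apply hor_ok; auto; intros; apply Hf1; auto. }
  assert (E3 : (Ci * CInt (fun y => f (x0, y)) y0 y1)%C = (F (x0, y1) - F (x0, y0))%C).
  { rewrite <- CInt_Cmult. apply (CInt_FTC (fun y => F (x0, y))); auto. intros t Ht; apply CD_ver, HD2; auto.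
    apply (ver_ok (fun z => Ci * f z)%C); auto; intros; apply Ccont_scal, Hf2; auto.
    apply ver_ok; auto; intros; apply Hf2; auto. }
  assert (E4 : (Ci * CInt (fun y => f (x1, y)) y0 y1)%C = (F (x1, y1) - F (x1, y0))%C).
  { rewrite <- CInt_Cmult. apply (CInt_FTC (fun y => F (x1, y))); auto. intros t Ht; apply CD_ver, HD2; auto.
    apply (ver_ok (fun z => Ci * f z)%C); auto; intros; apply Ccont_scal, Hf2; auto.
    apply ver_ok; auto; intros; apply Hf2; auto. }
  rewrite E1, E2, E3, E4. ring.
Qed.

Lemma Rect_minus f g x0 x1 y0 y1 : x0 <= x1 -> y0 <= y1 -> EdgeOK f x0 x1 y0 y1 -> EdgeOK g x0 x1 y0 y1 ->
  Rect (fun z => f z - g z)%C x0 x1 y0 y1 = (Rect f x0 x1 y0 y1 - Rect g x0 x1 y0 y1)%C.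
Proof.
  intros Hx Hy Hf Hg.
  replace (fun z => f z - g z)%C with (fun z => f z + (- (1)) * g z)%C
    by (apply functional_extensionality; intros; ring).
  rewrite Rect_plus, Rect_Cmult; auto. ring.
  destruct Hg as [G1 G2]. split; intros; split; apply Ccont_scal; first [apply G1|apply G2]; auto.
Qed.

Lemma Ccont_minus f g z : Ccont f z -> Ccont g z -> Ccont (fun y => f y - g y)%C z.
Proof.
  intros Hf Hg eps He.
  destruct (Hf (eps/2)) as [d1 [Hd1 H1]]; [lra|].
  destruct (Hg (eps/2)) as [d2 [Hd2 H2]]; [lra|].
  exists (Rmin d1 d2); split; [apply Rmin_pos; auto|]. intros y Hy.
  assert (Hy1 : Cmod (y - z) < d1) by (eapply Rlt_le_trans; [exact Hy|apply Rmin_l]).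
  assert (Hy2 : Cmod (y - z) < d2) by (eapply Rlt_le_trans; [exact Hy|apply Rmin_r]).
  specialize (H1 y Hy1). specialize (H2 y Hy2).
  replace (f y - g y - (f z - g z))%C with ((f y - f z) + - (g y - g z))%C by ring.
  eapply Rle_lt_trans; [apply Cmod_triangle|]. rewrite Cmod_opp. lra.
Qed.

Lemma CD_affine (c l p z : C) : CD (fun y => c + l * (y - p))%C z l.
Proof.
  intros eps He. exists 1; split; [lra|]. intros y _.
  replace (c + l * (y - p) - (c + l * (z - p)) - l * (y - z))%C with (RtoC 0) by ring.
  rewrite Cmod_0. pose proof (Cmod_ge_0 (y - z)). nra.
Qed.

Lemma CD_affine_prim (c l p z : C) :
  CD (fun y => c * (y - p) + l * (y - p) * (y - p) / 2)%C z (c + l * (z - p))%C.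
Proof.
  intros eps He. exists (2 * eps / (Cmod l + 1)). split.
  { apply Rdiv_lt_0_compat; [lra|]. pose proof (Cmod_ge_0 l); lra. }
  intros y Hy.
  replace (c * (y - p) + l * (y - p) * (y - p) / 2 - (c * (z - p) + l * (z - p) * (z - p) / 2) -
     (c + l * (z - p)) * (y - z))%C with (l / 2 * (y - z) * (y - z))%C by field.
  rewrite !Cmod_mult, Cmod_div by (intro E; injection E; lra).
  replace (Cmod 2) with 2 by (rewrite Cmod_R, Rabs_pos_eq; lra).
  pose proof (Cmod_ge_0 l). pose proof (Cmod_ge_0 (y - z)).
  apply Rmult_le_compat_r; auto.
  apply Rle_trans with ((Cmod l + 1) / 2 * Cmod (y - z)).
  { apply Rmult_le_compat_r; auto. lra. }
  apply Rle_trans with ((Cmod l + 1) / 2 * (2 * eps / (Cmod l + 1))).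
  { apply Rmult_le_compat_l; lra. }
  right; field; lra.
Qed.

Definition quad := (R * R * R * R)%type.
Definition qa (q : quad) := fst (fst (fst q)).
Definition qb (q : quad) := snd (fst (fst q)).
Definition qc (q : quad) := snd (fst q).
Definition qd (q : quad) := snd q.
Definition RQ (f : C -> C) (q : quad) := Rect f (qa q) (qb q) (qc q) (qd q).

Definition sub1 (q : quad) : quad := (qa q, (qa q + qb q) / 2, qc q, (qc q + qd q) / 2).
Definition sub2 (q : quad) : quad := ((qa q + qb q) / 2, qb q, qc q, (qc q + qd q) / 2).
Definition sub3 (q : quad) : quad := (qa q, (qa q + qb q) / 2, (qc q + qd q) / 2, qd q).
Definition sub4 (q : quad) : quad := ((qa q + qb q) / 2, qb q, (qc q + qd q) / 2, qd q).

Definition step (f : C -> C) (q : quad) : quad :=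
  if Rle_dec (Cmod (RQ f q) / 4) (Cmod (RQ f (sub1 q))) then sub1 q else
  if Rle_dec (Cmod (RQ f q) / 4) (Cmod (RQ f (sub2 q))) then sub2 q else
  if Rle_dec (Cmod (RQ f q) / 4) (Cmod (RQ f (sub3 q))) then sub3 q else sub4 q.

Lemma RQ_split f q : qa q <= qb q -> qc q <= qd q -> RectOK f (qa q) (qb q) (qc q) (qd q) ->
  RQ f q = (RQ f (sub1 q) + RQ f (sub2 q) + RQ f (sub3 q) + RQ f (sub4 q))%C.
Proof.
  intros H1 H2 Hf. unfold RQ, sub1, sub2, sub3, sub4, qa, qb, qc, qd in *; simpl in *.
  destruct q as [[[a b] c] d]; simpl in *.
  rewrite (Rect_splitx f a ((a + b) / 2) b) by (auto; lra).
  rewrite (Rect_splity f a ((a + b) / 2) c ((c + d) / 2) d) by (auto; try lra; intros x y Hx Hy; apply Hf; lra).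
  rewrite (Rect_splity f ((a + b) / 2) b c ((c + d) / 2) d) by (auto; try lra; intros x y Hx Hy; apply Hf; lra).
  ring.
Qed.

Lemma step_prop f q : qa q <= qb q -> qc q <= qd q -> RectOK f (qa q) (qb q) (qc q) (qd q) ->
  Cmod (RQ f q) / 4 <= Cmod (RQ f (step f q)) /\
  qa q <= qa (step f q) /\ qb (step f q) <= qb q /\ qc q <= qc (step f q) /\ qd (step f q) <= qd q /\
  qb (step f q) - qa (step f q) = (qb q - qa q) / 2 /\ qd (step f q) - qc (step f q) = (qd q - qc q) / 2.
Proof.
  intros H1 H2 Hf. unfold step.
  destruct (Rle_dec _ _) as [E1|E1]; [unfold sub1, qa, qb, qc, qd in *; simpl in *; repeat split; auto; lra|].
  destruct (Rle_dec _ _) as [E2|E2]; [unfold sub2, qa, qb, qc, qd in *; simpl in *; repeat split; auto; lra|].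
  destruct (Rle_dec _ _) as [E3|E3]; [unfold sub3, qa, qb, qc, qd in *; simpl in *; repeat split; auto; lra|].
  split; [|unfold sub4, qa, qb, qc, qd in *; simpl in *; repeat split; lra].
  apply Rnot_le_lt in E1, E2, E3.
  destruct (Rle_or_lt (Cmod (RQ f q) / 4) (Cmod (RQ f (sub4 q)))) as [E4|E4]; auto.
  exfalso. rewrite (RQ_split f q H1 H2 Hf) in E1, E2, E3, E4.
  set (A := RQ f (sub1 q)) in *. set (B := RQ f (sub2 q)) in *.
  set (Cc := RQ f (sub3 q)) in *. set (Dd := RQ f (sub4 q)) in *.
  assert (Cmod (A + B + Cc + Dd) <= Cmod A + Cmod B + Cmod Cc + Cmod Dd).
  { eapply Rle_trans; [apply Cmod_triangle|]. pose proof (Cmod_tri3 A B Cc). lra. }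
  lra.
Qed.

Lemma pow2_ge_INR n : INR n <= 2 ^ n.
Proof.
  induction n. simpl; lra. rewrite S_INR. simpl.
  assert (1 <= 2 ^ n) by (apply pow_R1_Rle; lra). lra.
Qed.

Theorem Goursat f x0 x1 y0 y1 : x0 <= x1 -> y0 <= y1 ->
  (forall x y, x0 <= x <= x1 -> y0 <= y <= y1 -> exists l, CD f (x, y) l) ->
  Rect f x0 x1 y0 y1 = RtoC 0.
Proof.
  intros Hx Hy HD.
  assert (Hok : RectOK f x0 x1 y0 y1).
  { intros x y Hx' Hy'. destruct (HD x y Hx' Hy') as [l Hl]. eapply CD_cont; eauto. }
  set (q0 := (x0, x1, y0, y1) : quad).
  set (qs := fun n => Nat.iter n (step f) q0).
  assert (Hqs : forall n, x0 <= qa (qs n) /\ qa (qs n) <= qb (qs n) /\ qb (qs n) <= x1 /\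
                          y0 <= qc (qs n) /\ qc (qs n) <= qd (qs n) /\ qd (qs n) <= y1 /\
                          qb (qs n) - qa (qs n) = (x1 - x0) / 2 ^ n /\
                          qd (qs n) - qc (qs n) = (y1 - y0) / 2 ^ n /\
                          Cmod (Rect f x0 x1 y0 y1) / 4 ^ n <= Cmod (RQ f (qs n))).
  { induction n.
    - unfold qs, q0, qa, qb, qc, qd; simpl. unfold Rdiv; rewrite !Rinv_1, !Rmult_1_r.
      repeat split; try lra. apply Rle_refl.
    - destruct IHn as (A1 & A2 & A3 & A4 & A5 & A6 & A7 & A8 & A9).
      assert (Hok' : RectOK f (qa (qs n)) (qb (qs n)) (qc (qs n)) (qd (qs n))).
      { intros x y Hx' Hy'. apply Hok; lra. }
      destruct (step_prop f (qs n) A2 A5 Hok') as (B1 & B2 & B3 & B4 & B5 & B6 & B7).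
      change (qs (S n)) with (step f (qs n)).
      assert (P2 : 0 < 2 ^ n) by (apply pow_lt; lra).
      assert (P4 : 0 < 4 ^ n) by (apply pow_lt; lra).
      repeat split; try lra.
      + rewrite B6, A7. simpl. field. lra.
      + rewrite B7, A8. simpl. field. lra.
      + simpl. apply Rle_trans with (Cmod (RQ f (qs n)) / 4); [|lra].
        replace (Cmod (Rect f x0 x1 y0 y1) / (4 * 4 ^ n)) with (Cmod (Rect f x0 x1 y0 y1) / 4 ^ n / 4) by (field; lra).
        lra. }
  assert (Hnest : forall n m, qa (qs n) <= qb (qs m) /\ qc (qs n) <= qd (qs m)).
  { assert (Mono : forall n k : nat, qa (qs n) <= qa (qs (k + n)%nat) /\ qb (qs (k + n)%nat) <= qb (qs n) /\
                               qc (qs n) <= qc (qs (k + n)%nat) /\ qd (qs (k + n)%nat) <= qd (qs n)).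
    { intros n k. induction k. simpl; lra.
      destruct (Hqs (k + n)%nat%nat) as (A1 & A2 & A3 & A4 & A5 & A6 & _).
      assert (Hok' : RectOK f (qa (qs (k + n)%nat)) (qb (qs (k + n)%nat)) (qc (qs (k + n)%nat)) (qd (qs (k + n)%nat))).
      { intros x y Hx' Hy'. apply Hok; lra. }
      destruct (step_prop f (qs (k + n)%nat) A2 A5 Hok') as (B1 & B2 & B3 & B4 & B5 & _).
      change (qs (S k + n)%nat) with (step f (qs (k + n)%nat)). lra. }
    intros n m. destruct (Nat.le_ge_cases n m) as [Hnm|Hnm].
    - destruct (Mono n (m - n)%nat) as (M1 & _ & M3 & _). replace (m - n + n)%nat with m in * by lia.
      destruct (Hqs m) as (_ & A2 & _ & _ & A5 & _). lra.
    - destruct (Mono m (n - m)%nat) as (_ & M2 & _ & M4). replace (n - m + m)%nat with n in * by lia.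
      destruct (Hqs n) as (_ & A2 & _ & _ & A5 & _). lra. }
  destruct (completeness (fun r => exists n, r = qa (qs n))) as [px Hpx].
  { exists x1. intros r [n ->]. destruct (Hqs n) as (_ & A2 & A3 & _). lra. }
  { exists (qa (qs 0%nat)). exists 0%nat; auto. }
  destruct (completeness (fun r => exists n, r = qc (qs n))) as [py Hpy].
  { exists y1. intros r [n ->]. destruct (Hqs n) as (_ & _ & _ & _ & A5 & A6 & _). lra. }
  { exists (qc (qs 0%nat)). exists 0%nat; auto. }
  assert (Hp : forall n, qa (qs n) <= px <= qb (qs n) /\ qc (qs n) <= py <= qd (qs n)).
  { intros n. split; split.
    - apply Hpx. exists n; auto.
    - apply Hpx. intros r [m ->]. apply Hnest.
    - apply Hpy. exists n; auto.
    - apply Hpy. intros r [m ->]. apply Hnest. }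
  assert (Hpin : x0 <= px <= x1 /\ y0 <= py <= y1).
  { destruct (Hp 0%nat) as [[A1 A2] [A3 A4]]. unfold qs, q0, qa, qb, qc, qd in *; simpl in *. lra. }
  destruct (HD px py (proj1 Hpin) (proj2 Hpin)) as [l Hl].
  set (p := (px, py) : C).
  set (alpha := Cmod (Rect f x0 x1 y0 y1)).
  set (s := (x1 - x0) + (y1 - y0)).
  assert (Hs : 0 <= s) by (unfold s; lra).
  assert (Hbound : forall eps, 0 < eps -> alpha <= 4 * eps * (s * s)).
  { intros eps He. destruct (Hl eps He) as [del [Hdel Hdl]].
    destruct (archimed (s / del)) as [Harch _].
    destruct (INR_unbounded (s / del)) as [n Hn].
    destruct (Hqs n) as (A1 & A2 & A3 & A4 & A5 & A6 & A7 & A8 & A9).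
    destruct (Hp n) as [[P1 P2] [P3 P4]].
    assert (H2n : 0 < 2 ^ n) by (apply pow_lt; lra).
    assert (Hsn : s / 2 ^ n < del).
    { apply Rle_lt_trans with (s / INR n).
      - unfold Rdiv. apply Rmult_le_compat_l; auto. apply Rinv_le_contravar; [|apply pow2_ge_INR].
        apply Rle_lt_trans with (s / del); [apply Rdiv_le_0_compat|]; lra.
      - assert (0 < INR n) by (apply Rle_lt_trans with (s / del); [apply Rdiv_le_0_compat|]; lra).
        unfold Rdiv in Hn. apply (Rmult_lt_compat_r del) in Hn; auto.
        rewrite Rmult_assoc, Rinv_l, Rmult_1_r in Hn by lra.
        apply Rmult_lt_reg_r with (INR n); auto. unfold Rdiv. rewrite Rmult_assoc, Rinv_l, Rmult_1_r by lra. lra. }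
    set (a := qa (qs n)) in *. set (b := qb (qs n)) in *. set (c := qc (qs n)) in *. set (d := qd (qs n)) in *.
    set (aff := fun z => (f p + l * (z - p))%C).
    assert (HokN : RectOK f a b c d) by (intros x y Hx' Hy'; apply Hok; lra).
    assert (Haff : RectOK aff a b c d).
    { intros x y _ _. eapply CD_cont. apply CD_affine. }
    assert (E0 : Rect aff a b c d = RtoC 0).
    { apply (Rect_FTC (fun y => f p * (y - p) + l * (y - p) * (y - p) / 2)%C); auto.
      apply RectOK_Edge; auto. intros; split; apply CD_affine_prim. intros; split; apply CD_affine_prim. }
    assert (E1 : RQ f (qs n) = Rect (fun z => f z - aff z)%C a b c d).
    { unfold RQ. rewrite Rect_minus, E0 by (auto; apply RectOK_Edge; auto). fold a b c d. ring. }
    assert (Hpt : forall x y, a <= x <= b -> c <= y <= d -> Cmod (f (x, y) - aff (x, y)) <= eps * (s / 2 ^ n)).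
    { intros x y Hx' Hy'.
      assert (Hz : Cmod ((x, y) - p)%C <= s / 2 ^ n).
      { eapply Rle_trans; [apply Cmod_le_abs|]. unfold p, Re, Im; simpl.
        unfold s. replace ((x1 - x0 + (y1 - y0)) / 2 ^ n) with ((x1 - x0) / 2 ^ n + (y1 - y0) / 2 ^ n) by (field; lra).
        rewrite <- A7, <- A8. fold a b c d.
        apply Rplus_le_compat; apply Rabs_le; lra. }
      specialize (Hdl (x, y) (Rle_lt_trans _ _ _ Hz Hsn)).
      unfold aff. replace (f (x, y) - (f p + l * ((x, y) - p)))%C with (f (x, y) - f p - l * ((x, y) - p))%C by ring.
      eapply Rle_trans; [exact Hdl|]. apply Rmult_le_compat_l; [lra | exact Hz]. }
    assert (Hrq : Cmod (RQ f (qs n)) <= 4 * ((b - a) + (d - c)) * (eps * (s / 2 ^ n))).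
    { rewrite E1. apply Rect_bound; try lra.
      - apply RectOK_Edge; try lra. intros x y Hx' Hy'. unfold aff.
        apply Ccont_minus. apply HokN; auto. eapply CD_cont; apply CD_affine.
      - intros; split; apply Hpt; lra.
      - intros; split; apply Hpt; lra. }
    assert (Hbd : (b - a) + (d - c) = s / 2 ^ n).
    { rewrite A7, A8. unfold s. field. lra. }
    rewrite Hbd in Hrq. fold alpha in A9.
    assert (H4n : 4 ^ n = 2 ^ n * 2 ^ n).
    { rewrite <- Rpow_mult_distr. replace (2 * 2) with 4 by lra. reflexivity. }
    rewrite H4n in A9.
    assert (alpha / (2 ^ n * 2 ^ n) <= 4 * eps * (s * s) / (2 ^ n * 2 ^ n)).
    { eapply Rle_trans; [exact A9|]. eapply Rle_trans; [exact Hrq|]. right. field. lra. }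
    apply Rmult_le_reg_r with (/ (2 ^ n * 2 ^ n)).
    apply Rinv_0_lt_compat; nra. exact H. }
  assert (Ha0 : alpha <= 0).
  { destruct (Rle_or_lt alpha 0) as [H|H]; auto.
    specialize (Hbound (alpha / (8 * (s * s + 1)))).
    assert (0 < alpha / (8 * (s * s + 1))) by (apply Rdiv_lt_0_compat; nra).
    specialize (Hbound H0).
    assert (4 * (alpha / (8 * (s * s + 1))) * (s * s) < alpha).
    { replace (4 * (alpha / (8 * (s * s + 1))) * (s * s)) with (alpha * (s * s / (2 * (s * s + 1)))) by (field; nra).
      rewrite <- (Rmult_1_r alpha) at 2. apply Rmult_lt_compat_l; auto.
      apply Rmult_lt_reg_r with (2 * (s * s + 1)); [nra|]. unfold Rdiv. rewrite Rmult_assoc, Rinv_l by nra. nra. }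
    lra. }
  apply Cmod_eq_0. pose proof (Cmod_ge_0 (Rect f x0 x1 y0 y1)). fold alpha in H |- *. lra.
Qed.

Lemma pair_neq (x y : R) (w : C) : x <> Re w -> (x, y) <> w.
Proof. intros H E. apply H. rewrite <- E. reflexivity. Qed.
Lemma pair_neq' (x y : R) (w : C) : y <> Im w -> (x, y) <> w.
Proof. intros H E. apply H. rewrite <- E. reflexivity. Qed.

Theorem Cauchy_exc g x0 x1 y0 y1 (w : C) :
  x0 < Re w < x1 -> y0 < Im w < y1 -> RectOK g x0 x1 y0 y1 ->
  (forall x y, x0 <= x <= x1 -> y0 <= y <= y1 -> (x, y) <> w -> exists l, CD g (x, y) l) ->
  Rect g x0 x1 y0 y1 = RtoC 0.
Proof.
  intros Hx Hy Hok HD.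
  destruct (Hok (Re w) (Im w) ltac:(lra) ltac:(lra) 1 Rlt_0_1) as [d0 [Hd0 Hc]].
  replace (Re w, Im w) with w in Hc by (destruct w; reflexivity).
  set (M := Cmod (g w) + 1).
  assert (Hb : forall del, 0 < del -> del < d0 / 2 -> del < Re w - x0 -> del < x1 - Re w ->
                del < Im w - y0 -> del < y1 - Im w -> Cmod (Rect g x0 x1 y0 y1) <= 16 * del * M).
  { intros del Hdel H1 H2 H3 H4 H5.
    set (a := Re w - del). set (b := Re w + del). set (c := Im w - del). set (d := Im w + del).
    rewrite (Rect_splitx g x0 a x1) by (unfold a; auto; lra).
    rewrite (Rect_splitx g a b x1) by (unfold a, b; auto; try lra; intros x y Hx' Hy'; apply Hok; unfold a in *; lra).
    rewrite (Rect_splity g a b y0 c y1) by (unfold a, b, c; auto; try lra; intros x y Hx' Hy'; apply Hok; unfold a, b in *; lra).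
    rewrite (Rect_splity g a b c d y1) by (unfold a, b, c, d; auto; try lra; intros x y Hx' Hy'; apply Hok; unfold a, b, c in *; lra).
    rewrite (Goursat g x0 a y0 y1) by (unfold a; try lra; intros x y Hx' Hy'; apply HD; try lra; apply pair_neq; unfold a in *; lra).
    rewrite (Goursat g b x1 y0 y1) by (unfold b; try lra; intros x y Hx' Hy'; apply HD; try lra; apply pair_neq; unfold b in *; lra).
    rewrite (Goursat g a b y0 c) by (unfold a, b, c; try lra; intros x y Hx' Hy'; apply HD; unfold a, b, c in *; try lra; apply pair_neq'; lra).
    rewrite (Goursat g a b d y1) by (unfold a, b, d; try lra; intros x y Hx' Hy'; apply HD; unfold a, b, d in *; try lra; apply pair_neq'; lra).
    match goal with |- Cmod ?X <= _ => replace X with (Rect g a b c d) by ring end.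
    assert (Hin : forall x y, a <= x <= b -> c <= y <= d -> Cmod (g (x, y)) <= M).
    { intros x y Hx' Hy'.
      assert (Cmod ((x, y) - w)%C < d0).
      { eapply Rle_lt_trans; [apply Cmod_le_abs|].
        replace (Re ((x, y) - w)%C) with (x - Re w) by (unfold Re; simpl; ring).
        replace (Im ((x, y) - w)%C) with (y - Im w) by (unfold Im; simpl; ring).
        unfold a, b, c, d in *. apply Rle_lt_trans with (del + del); [|lra].
        apply Rplus_le_compat; apply Rabs_le; lra. }
      specialize (Hc _ H). pose proof (Cmod_sub_tri (g (x, y)) (g w)). unfold M; lra. }
    assert (Hr : Cmod (Rect g a b c d) <= 4 * ((b - a) + (d - c)) * M).
    { apply Rect_bound; unfold a, b, c, d; try lra.
      - apply RectOK_Edge; try lra. intros x y Hx' Hy'. apply Hok; lra.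
      - intros; split; apply Hin; unfold a, b, c, d; lra.
      - intros; split; apply Hin; unfold a, b, c, d; lra. }
    replace ((b - a) + (d - c)) with (4 * del) in Hr by (unfold a, b, c, d; ring). lra. }
  assert (HM : 0 < M) by (unfold M; pose proof (Cmod_ge_0 (g w)); lra).
  set (m := Rmin (Rmin (d0 / 2) (Rmin (Re w - x0) (x1 - Re w))) (Rmin (Im w - y0) (y1 - Im w))).
  assert (Hm : 0 < m) by (unfold m; repeat apply Rmin_pos; lra).
  assert (Hle : forall del, 0 < del -> del < m -> Cmod (Rect g x0 x1 y0 y1) <= 16 * del * M).
  { intros del H1 H2. unfold m in H2.
    pose proof (Rmin_l (Rmin (d0 / 2) (Rmin (Re w - x0) (x1 - Re w))) (Rmin (Im w - y0) (y1 - Im w))).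
    pose proof (Rmin_r (Rmin (d0 / 2) (Rmin (Re w - x0) (x1 - Re w))) (Rmin (Im w - y0) (y1 - Im w))).
    pose proof (Rmin_l (d0 / 2) (Rmin (Re w - x0) (x1 - Re w))).
    pose proof (Rmin_r (d0 / 2) (Rmin (Re w - x0) (x1 - Re w))).
    pose proof (Rmin_l (Re w - x0) (x1 - Re w)). pose proof (Rmin_r (Re w - x0) (x1 - Re w)).
    pose proof (Rmin_l (Im w - y0) (y1 - Im w)). pose proof (Rmin_r (Im w - y0) (y1 - Im w)).
    apply Hb; lra. }
  apply Cmod_eq_0. pose proof (Cmod_ge_0 (Rect g x0 x1 y0 y1)).
  destruct (Rle_or_lt (Cmod (Rect g x0 x1 y0 y1)) 0) as [H0|H0]; [lra|].
  set (del := Rmin (m / 2) (Cmod (Rect g x0 x1 y0 y1) / (32 * M))).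
  assert (0 < del) by (unfold del; apply Rmin_pos; [lra|apply Rdiv_lt_0_compat; lra]).
  assert (del < m) by (unfold del; eapply Rle_lt_trans; [apply Rmin_l|lra]).
  specialize (Hle del H1 H2).
  assert (del <= Cmod (Rect g x0 x1 y0 y1) / (32 * M)) by apply Rmin_r.
  assert (16 * del * M <= Cmod (Rect g x0 x1 y0 y1) / 2).
  { apply Rle_trans with (16 * (Cmod (Rect g x0 x1 y0 y1) / (32 * M)) * M).
    apply Rmult_le_compat_r; lra. right; field; lra. }
  lra.
Qed.

Definition Ceq_dec (z w : C) : {z = w} + {z <> w}.
Proof.
  destruct z as [x1 y1], w as [x2 y2].
  destruct (Req_EM_T x1 x2) as [E1|E1]; [destruct (Req_EM_T y1 y2) as [E2|E2]|].
  - left; subst; reflexivity.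
  - right; intro E; injection E; intros; contradiction.
  - right; intro E; injection E; intros; contradiction.
Defined.

Definition CDex f z := exists l, CD f z l.

Lemma CDex_cont f z : CDex f z -> Ccont f z.
Proof. intros [l H]. eapply CD_cont; eauto. Qed.
Lemma CDex_const c z : CDex (fun _ => c) z.
Proof. eexists; apply CD_const. Qed.
Lemma CDex_id z : CDex (fun y => y) z.
Proof. eexists; apply CD_id. Qed.
Lemma CDex_plus f g z : CDex f z -> CDex g z -> CDex (fun y => f y + g y)%C z.
Proof. intros [a A] [b B]. eexists; apply CD_plus; eauto. Qed.
Lemma CDex_mult f g z : CDex f z -> CDex g z -> CDex (fun y => f y * g y)%C z.
Proof. intros [a A] [b B]. eexists; apply CD_mult; eauto. Qed.
Lemma CDex_inv g z : CDex g z -> g z <> RtoC 0 -> CDex (fun y => / g y)%C z.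
Proof. intros [a A] H. eexists; apply CD_inv; eauto. Qed.
Lemma CDex_ext f g z : (forall y, f y = g y) -> CDex f z -> CDex g z.
Proof. intros E [a A]. exists a. eapply CD_ext; eauto. Qed.
Lemma CDex_minus f g z : CDex f z -> CDex g z -> CDex (fun y => f y - g y)%C z.
Proof. intros A B. apply (CDex_ext (fun y => f y + (- (1)) * g y)%C). intros; ring.
  apply CDex_plus; auto. apply CDex_mult; auto. apply CDex_const. Qed.
Lemma CDex_pow N z : CDex (fun y => y ^ N)%C z.
Proof. induction N. apply (CDex_ext (fun _ => RtoC 1)); [intros; reflexivity|apply CDex_const].
  apply (CDex_ext (fun y => y * y ^ N)%C); [intros; reflexivity|]. apply CDex_mult; auto. apply CDex_id. Qed.
Lemma CDex_div f g z : CDex f z -> CDex g z -> g z <> RtoC 0 -> CDex (fun y => f y / g y)%C z.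
Proof. intros. apply CDex_mult; auto. apply CDex_inv; auto. Qed.

Lemma CD_local f g z l del : 0 < del -> (forall y, Cmod (y - z) < del -> f y = g y) -> CD f z l -> CD g z l.
Proof.
  intros Hd E H eps He. destruct (H eps He) as [d [Hd' Hy]]. exists (Rmin d del). split; [apply Rmin_pos; auto|].
  intros y Hy'.
  assert (E1 : f y = g y) by (apply E; eapply Rlt_le_trans; [exact Hy'|apply Rmin_r]).
  assert (E2 : f z = g z) by (apply E; replace (z - z)%C with (RtoC 0) by ring; rewrite Cmod_0; auto).
  rewrite <- E1, <- E2. apply Hy. eapply Rlt_le_trans; [exact Hy'|apply Rmin_l].
Qed.

Definition bd (rho : R) (z : C) : Prop :=
  Rabs (Re z) <= rho /\ Rabs (Im z) <= rho /\ (Rabs (Re z) = rho \/ Rabs (Im z) = rho).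

Lemma bd_props rho z w : 0 < rho -> bd rho z -> Cmod w < rho / 2 ->
  rho <= Cmod z /\ rho / 2 <= Cmod (z - w) /\ Cmod z <= 2 * rho.
Proof.
  intros Hr [H1 [H2 H3]] Hw.
  pose proof (Re_le z). pose proof (Im_le z). pose proof (Cmod_le_abs z).
  pose proof (Re_le w). pose proof (Im_le w).
  pose proof (Re_le (z - w)%C). pose proof (Im_le (z - w)%C).
  replace (Re (z - w)%C) with (Re z - Re w) in * by (unfold Re; simpl; ring).
  replace (Im (z - w)%C) with (Im z - Im w) in * by (unfold Im; simpl; ring).
  split; [destruct H3; lra|]. split; [|lra].
  destruct H3 as [H3|H3].
  - pose proof (Rabs_triang_inv (Re z) (Re w)). lra.
  - pose proof (Rabs_triang_inv (Im z) (Im w)). lra.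
Qed.

Lemma bd_neq rho z w : 0 < rho -> bd rho z -> Cmod w < rho / 2 -> z <> w /\ z <> RtoC 0.
Proof.
  intros Hr Hb Hw. destruct (bd_props rho z w Hr Hb Hw) as [A [B _]]. split; intro E.
  - subst. replace (w - w)%C with (RtoC 0) in B by ring. rewrite Cmod_0 in B. lra.
  - subst. rewrite Cmod_0 in A. lra.
Qed.

Lemma Rabs_rho rho : 0 <= rho -> Rabs rho = rho /\ Rabs (- rho) = rho.
Proof. intros. split; [apply Rabs_pos_eq; auto|rewrite Rabs_Ropp; apply Rabs_pos_eq; auto]. Qed.

Lemma bd_hor rho x : 0 <= rho -> -rho <= x <= rho -> bd rho (x, -rho) /\ bd rho (x, rho).
Proof.
  intros Hr Hx. destruct (Rabs_rho rho Hr) as [A B].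
  unfold bd, Re, Im; simpl. repeat split; try (apply Rabs_le; lra); right; auto.
Qed.
Lemma bd_ver rho y : 0 <= rho -> -rho <= y <= rho -> bd rho (-rho, y) /\ bd rho (rho, y).
Proof.
  intros Hr Hx. destruct (Rabs_rho rho Hr) as [A B].
  unfold bd, Re, Im; simpl. repeat split; try (apply Rabs_le; lra); left; auto.
Qed.

Lemma EdgeOK_bd h rho : 0 <= rho -> (forall z, bd rho z -> Ccont h z) -> EdgeOK h (-rho) rho (-rho) rho.
Proof.
  intros Hr H. split; intros t Ht; split; apply H.
  all: first [apply (bd_hor rho t Hr Ht) | apply (bd_ver rho t Hr Ht)].
Qed.

Lemma Rect_ext_bd f g rho : 0 <= rho -> (forall z, bd rho z -> f z = g z) ->
  Rect f (-rho) rho (-rho) rho = Rect g (-rho) rho (-rho) rho.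
Proof.
  intros Hr H. apply Rect_ext; try lra; intros t Ht; split; apply H.
  all: first [apply (bd_hor rho t Hr Ht) | apply (bd_ver rho t Hr Ht)].
Qed.

Lemma Rect_bound_bd f rho M : 0 <= rho -> EdgeOK f (-rho) rho (-rho) rho ->
  (forall z, bd rho z -> Cmod (f z) <= M) ->
  Cmod (Rect f (-rho) rho (-rho) rho) <= 16 * rho * M.
Proof.
  intros Hr Hok H. eapply Rle_trans. apply Rect_bound; try lra; auto.
  1,2: intros t Ht; split; apply H.
  all: try first [apply (bd_hor rho t Hr Ht) | apply (bd_ver rho t Hr Ht)].
  right; ring.
Qed.

Lemma sub_eq0 (a b : C) : (a - b)%C = RtoC 0 -> a = b.
Proof. intros E. replace a with ((a - b) + b)%C by ring. rewrite E. ring. Qed.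

Definition T (f : C -> C) (rho : R) (N : nat) (w : C) : C :=
  Rect (fun z => f z / (z ^ N * (z - w)))%C (-rho) rho (-rho) rho.

Definition SqCD (f : C -> C) (rho : R) : Prop :=
  forall x y, Rabs x <= rho -> Rabs y <= rho -> CDex f (x, y).

Lemma T_ok f rho N w : 0 < rho -> SqCD f rho -> Cmod w < rho / 2 ->
  EdgeOK (fun z => f z / (z ^ N * (z - w)))%C (-rho) rho (-rho) rho.
Proof.
  intros Hr Hf Hw. apply EdgeOK_bd; [lra|]. intros z Hz. apply CDex_cont.
  destruct (bd_neq rho z w Hr Hz Hw) as [N1 N2].
  apply CDex_div.
  - destruct z as [x y]. destruct Hz as [H1 [H2 _]]. apply Hf; auto.
  - apply CDex_mult. apply CDex_pow. apply CDex_minus. apply CDex_id. apply CDex_const.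
  - apply Cmult_neq_0. apply Cpow_nz; auto. intro E. apply N1. apply sub_eq0; auto.
Qed.

Lemma Cauchy_formula f rho w : 0 < rho -> SqCD f rho -> Cmod w < rho / 2 ->
  (f w * T (fun _ => RtoC 1) rho 0 w)%C = T f rho 0 w.
Proof.
  intros Hr Hf Hw.
  assert (Hwre : Rabs (Re w) < rho / 2) by (eapply Rle_lt_trans; [apply Re_le|auto]).
  assert (Hwim : Rabs (Im w) < rho / 2) by (eapply Rle_lt_trans; [apply Im_le|auto]).
  destruct (Hf (Re w) (Im w) ltac:(lra) ltac:(lra)) as [l Hl].
  replace (Re w, Im w) with w in Hl by (destruct w; reflexivity).
  set (g := fun z => if Ceq_dec z w then l else ((f z - f w) / (z - w))%C).
  assert (Hgne : forall z, z <> w -> g z = ((f z - f w) / (z - w))%C).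
  { intros z Hz. unfold g. destruct (Ceq_dec z w); tauto. }
  assert (Hgw : g w = l) by (unfold g; destruct (Ceq_dec w w); tauto).
  assert (HDg : forall x y, Rabs x <= rho -> Rabs y <= rho -> (x, y) <> w -> CDex g (x, y)).
  { intros x y Hx Hy Hne.
    assert (Hpos : 0 < Cmod ((x, y) - w)%C).
    { apply Cmod_gt_0. intro E. apply Hne. apply sub_eq0; auto. }
    assert (Hq : CDex (fun z => (f z - f w) / (z - w))%C (x, y)).
    { apply CDex_div. apply CDex_minus. apply Hf; auto. apply CDex_const.
      apply CDex_minus. apply CDex_id. apply CDex_const.
      intro E. apply Hne. apply sub_eq0; auto. }
    destruct Hq as [l' Hq]. exists l'. apply (CD_local (fun z => ((f z - f w) / (z - w))%C) g _ _ _ Hpos); auto.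
    intros z Hz. rewrite Hgne; auto. intro E. subst z.
    replace (w - (x, y))%C with (- ((x, y) - w))%C in Hz by ring. rewrite Cmod_opp in Hz. lra. }
  assert (Hcw : Ccont g w).
  { intros eps He. destruct (Hl (eps / 2)) as [d [Hd Hy]]; [lra|]. exists d; split; auto.
    intros y Hy'. rewrite Hgw.
    destruct (Ceq_dec y w) as [E|E].
    - subst y. rewrite Hgw. replace (l - l)%C with (RtoC 0) by ring. rewrite Cmod_0; lra.
    - rewrite Hgne by auto.
      assert (Hpos : 0 < Cmod (y - w)).
      { apply Cmod_gt_0. intro E'. apply E. apply sub_eq0; auto. }
      assert (Hnz : (y - w)%C <> RtoC 0) by (apply Cmod_gt_0; auto).
      replace ((f y - f w) / (y - w) - l)%C with ((f y - f w - l * (y - w)) / (y - w))%C by (field; auto).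
      rewrite Cmod_div by auto. specialize (Hy y Hy').
      apply Rle_lt_trans with (eps / 2); [|lra].
      apply Rmult_le_reg_r with (Cmod (y - w)); auto. unfold Rdiv. rewrite Rmult_assoc, Rinv_l by lra. lra. }
  assert (Hok : RectOK g (-rho) rho (-rho) rho).
  { intros x y Hx Hy. destruct (Ceq_dec (x, y) w) as [E|E].
    - rewrite E; auto.
    - apply CDex_cont, HDg; auto; apply Rabs_le; lra. }
  assert (H0 : Rect g (-rho) rho (-rho) rho = RtoC 0).
  { apply (Cauchy_exc g _ _ _ _ w); auto.
    - split; apply Rabs_lt_between in Hwre; lra.
    - split; apply Rabs_lt_between in Hwim; lra.
    - intros x y Hx Hy Hne. apply HDg; auto; apply Rabs_le; lra. }
  assert (E : Rect g (-rho) rho (-rho) rho =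
     Rect (fun z => f z / (z ^ 0 * (z - w)) - f w * (RtoC 1 / (z ^ 0 * (z - w))))%C (-rho) rho (-rho) rho).
  { apply Rect_ext_bd; [lra|]. intros z Hz. destruct (bd_neq rho z w Hr Hz Hw) as [N1 N2].
    rewrite Hgne by auto. simpl.
    assert ((z - w)%C <> RtoC 0). { intro E. apply N1. apply sub_eq0; auto. }
    field. auto. }
  assert (Ok1 : EdgeOK (fun z => RtoC 1 / (z ^ 0 * (z - w)))%C (-rho) rho (-rho) rho).
  { apply (T_ok (fun _ => RtoC 1)); auto. intros x y _ _; apply CDex_const. }
  assert (Ok2 : EdgeOK (fun z => f z / (z ^ 0 * (z - w)))%C (-rho) rho (-rho) rho) by (apply T_ok; auto).
  assert (Ok3 : EdgeOK (fun z => f w * (RtoC 1 / (z ^ 0 * (z - w))))%C (-rho) rho (-rho) rho).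
  { destruct Ok1 as [A B]. split; intros; split; apply Ccont_scal; first [apply A|apply B]; auto. }
  rewrite E in H0. rewrite Rect_minus in H0 by (auto; lra).
  rewrite (Rect_Cmult (fun z => RtoC 1 / (z ^ 0 * (z - w)))%C (f w)) in H0 by (auto; lra).
  unfold T. symmetry. apply sub_eq0. exact H0.
Qed.

Lemma least_exists (P : nat -> Prop) : (exists n, P n) -> exists k, P k /\ forall m, (m < k)%nat -> ~ P m.
Proof.
  intros [n Hn]. revert Hn. induction n as [n IH] using (well_founded_induction Wf_nat.lt_wf). intros Hn.
  destruct (classic (exists m, (m < n)%nat /\ P m)) as [[m [Hm1 Hm2]]|Hno].
  - apply (IH m Hm1 Hm2).
  - exists n. split; auto. intros m Hm Pm. apply Hno. exists m; auto.
Qed.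

Lemma T_rec f rho N w : 0 < rho -> SqCD f rho -> Cmod w < rho / 2 ->
  T f rho N w = (T f rho N (RtoC 0) + w * T f rho (S N) w)%C.
Proof.
  intros Hr Hf Hw.
  assert (Hw0 : Cmod (RtoC 0) < rho / 2) by (rewrite Cmod_0; lra).
  unfold T. rewrite <- Rect_Cmult, <- Rect_plus; try lra.
  - apply Rect_ext_bd; [lra|]. intros z Hz.
    destruct (bd_neq rho z w Hr Hz Hw) as [N1 N2].
    assert ((z - w)%C <> RtoC 0) by (intro E; apply N1, sub_eq0; auto).
    assert ((z ^ N)%C <> RtoC 0) by (apply Cpow_nz; auto).
    simpl. field. repeat split; auto.
  - apply T_ok; auto.
  - destruct (T_ok f rho (S N) w Hr Hf Hw) as [A B]. split; intros; split; apply Ccont_scal; first [apply A|apply B]; auto.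
  - apply T_ok; auto.
Qed.

Lemma T_bound f rho N w M : 0 < rho -> SqCD f rho -> Cmod w < rho / 2 ->
  (forall z, bd rho z -> Cmod (f z) <= M) -> Cmod (T f rho N w) <= 32 * M / rho ^ N.
Proof.
  intros Hr Hf Hw HM. unfold T.
  assert (HrN : 0 < rho ^ N) by (apply pow_lt; auto).
  eapply Rle_trans. apply Rect_bound_bd; [lra| apply T_ok; auto|].
  - intros z Hz. instantiate (1 := M / (rho ^ N * (rho / 2))).
    destruct (bd_props rho z w Hr Hz Hw) as [A [B _]].
    destruct (bd_neq rho z w Hr Hz Hw) as [N1 N2].
    assert ((z - w)%C <> RtoC 0) by (intro E; apply N1, sub_eq0; auto).
    assert ((z ^ N)%C <> RtoC 0) by (apply Cpow_nz; auto).
    rewrite Cmod_div by (apply Cmult_neq_0; auto). rewrite Cmod_mult, Cmod_pow.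
    pose proof (HM z Hz). pose proof (Cmod_ge_0 (f z)).
    unfold Rdiv. apply Rmult_le_compat; auto. left; apply Rinv_0_lt_compat.
    apply Rmult_lt_0_compat; [apply pow_lt|]; lra.
    apply Rinv_le_contravar. apply Rmult_lt_0_compat; lra.
    apply Rmult_le_compat; [apply pow_le; lra | lra | apply pow_incr; lra | lra].
  - right. field. lra.
Qed.

Lemma Rcont_cmod g t : Rcont g t -> continuity_pt (fun s => Cmod (g s)) t.
Proof.
  intros H eps He. destruct (H eps He) as [d [Hd Hy]]. exists d; split; auto.
  intros x [_ Hx]. simpl in *. unfold R_dist in *. specialize (Hy x Hx).
  pose proof (Cmod_sub_tri (g x) (g t)). pose proof (Cmod_sub_tri (g t) (g x)).
  replace (g t - g x)%C with (- (g x - g t))%C in H1 by ring. rewrite Cmod_opp in H1.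
  apply Rabs_lt_between. lra.
Qed.

Lemma edge_bounded g a b : a <= b -> (forall t, a <= t <= b -> Rcont g t) ->
  exists M, forall t, a <= t <= b -> Cmod (g t) <= M.
Proof.
  intros Hab H. destruct (continuity_ab_maj (fun s => Cmod (g s)) a b Hab) as [x [Hx _]].
  intros c Hc. apply Rcont_cmod, H; auto.
  exists (Cmod (g x)). auto.
Qed.

Lemma bd_bounded f rho : 0 < rho -> SqCD f rho -> exists M, forall z, bd rho z -> Cmod (f z) <= M.
Proof.
  intros Hr Hf.
  assert (HC : forall x y, Rabs x <= rho -> Rabs y <= rho -> Ccont f (x, y)) by (intros; apply CDex_cont, Hf; auto).
  assert (Hrr : Rabs rho = rho /\ Rabs (- rho) = rho) by (apply Rabs_rho; lra).
  destruct (edge_bounded (fun t => f (t, - rho)) (-rho) rho) as [M1 H1]; [lra| intros; apply Ccont_hor, HC; try apply Rabs_le; lra|].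
  destruct (edge_bounded (fun t => f (t, rho)) (-rho) rho) as [M2 H2]; [lra| intros; apply Ccont_hor, HC; try apply Rabs_le; lra|].
  destruct (edge_bounded (fun t => f (- rho, t)) (-rho) rho) as [M3 H3]; [lra| intros; apply Ccont_ver, HC; try apply Rabs_le; lra|].
  destruct (edge_bounded (fun t => f (rho, t)) (-rho) rho) as [M4 H4]; [lra| intros; apply Ccont_ver, HC; try apply Rabs_le; lra|].
  exists (Rmax (Rmax M1 M2) (Rmax M3 M4)). intros [x y] [Hx [Hy Hor]]. unfold Re, Im in *; simpl in *.
  pose proof (Rmax_l M1 M2). pose proof (Rmax_r M1 M2). pose proof (Rmax_l M3 M4). pose proof (Rmax_r M3 M4).
  pose proof (Rmax_l (Rmax M1 M2) (Rmax M3 M4)). pose proof (Rmax_r (Rmax M1 M2) (Rmax M3 M4)).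
  apply Rabs_le_between in Hx. apply Rabs_le_between in Hy.
  destruct Hor as [E|E].
  - destruct (Rle_or_lt 0 x).
    + rewrite Rabs_pos_eq in E by auto. subst x. specialize (H4 y Hy). lra.
    + rewrite Rabs_left in E by auto. replace x with (- rho) by lra. specialize (H3 y Hy). lra.
  - destruct (Rle_or_lt 0 y).
    + rewrite Rabs_pos_eq in E by auto. subst y. specialize (H2 x Hx). lra.
    + rewrite Rabs_left in E by auto. replace y with (- rho) by lra. specialize (H1 x Hx). lra.
Qed.

Lemma ineq1 rho x : 0 < rho -> -rho <= x <= rho -> 1 / (2 * rho) <= rho / (x ^ 2 + rho ^ 2).
Proof.
  intros Hr Hx. assert (P : 0 < x ^ 2 + rho ^ 2) by nra.
  replace (1 / (2 * rho)) with (rho / (2 * rho ^ 2)) by (field; lra).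
  unfold Rdiv. apply Rmult_le_compat_l; [lra|]. apply Rinv_le_contravar; auto. nra.
Qed.

Lemma RInt_ge_c (h : R -> R) a b c : a <= b -> ex_RInt h a b -> (forall t, a <= t <= b -> c <= h t) ->
  (b - a) * c <= RInt h a b.
Proof.
  intros Hab He H. rewrite <- (RInt_const (V:=R_CompleteNormedModule)).
  apply RInt_le; auto. apply (ex_RInt_const (V:=R_CompleteNormedModule)). intros; apply H; lra.
Qed.

Lemma inv_formula_re x y : x ^ 2 + y ^ 2 <> 0 ->
  Re (RtoC 1 / ((x, y) ^ 0 * ((x, y) - RtoC 0)))%C = x / (x ^ 2 + y ^ 2).
Proof. intros. unfold Cdiv, Cmult, Cinv, Cminus, Cplus, Copp, RtoC, Re; simpl. field.
  replace (x * x + y * y) with (x ^ 2 + y ^ 2) by ring; auto. Qed.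
Lemma inv_formula_im x y : x ^ 2 + y ^ 2 <> 0 ->
  Im (RtoC 1 / ((x, y) ^ 0 * ((x, y) - RtoC 0)))%C = - y / (x ^ 2 + y ^ 2).
Proof. intros. unfold Cdiv, Cmult, Cinv, Cminus, Cplus, Copp, RtoC, Im; simpl. field.
  replace (x * x + y * y) with (x ^ 2 + y ^ 2) by ring; auto. Qed.

Lemma Im_Rect h x0 x1 y0 y1 : Im (Rect h x0 x1 y0 y1) =
  RInt (fun x => Im (h (x, y0))) x0 x1 + RInt (fun y => Re (h (x1, y))) y0 y1
  - RInt (fun x => Im (h (x, y1))) x0 x1 - RInt (fun y => Re (h (x0, y))) y0 y1.
Proof. unfold Rect, Hint, Vint, CInt, Cminus, Cplus, Copp, Cmult, Ci, Im, Re. simpl. ring. Qed.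

Lemma K0_nonzero rho : 0 < rho -> T (fun _ => RtoC 1) rho 0 (RtoC 0) <> RtoC 0.
Proof.
  intros Hr.
  assert (Hf : SqCD (fun _ => RtoC 1) rho) by (intros x y _ _; apply CDex_const).
  assert (Hw : Cmod (RtoC 0) < rho / 2) by (rewrite Cmod_0; lra).
  destruct (T_ok (fun _ => RtoC 1) rho 0 (RtoC 0) Hr Hf Hw) as [E1 E2].
  set (g := fun z : C => (RtoC 1 / (z ^ 0 * (z - RtoC 0)))%C).
  assert (Hx : forall y, -rho <= y <= rho -> y ^ 2 + rho ^ 2 <> 0) by (intros; nra).
  assert (Hx' : forall y, -rho <= y <= rho -> rho ^ 2 + y ^ 2 <> 0) by (intros; nra).
  assert (A1 : 2 * rho * (1 / (2 * rho)) <= RInt (fun x => Im (g (x, - rho))) (- rho) rho).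
  { replace (2 * rho) with (rho - - rho) at 1 by ring. apply RInt_ge_c; [lra| |].
    apply CIok_im, hor_ok; [lra|]. intros; apply E1; auto.
    intros t Ht. unfold g. rewrite inv_formula_im by (replace ((- rho) ^ 2) with (rho ^ 2) by ring; auto).
    replace ((- rho) ^ 2) with (rho ^ 2) by ring. replace (- - rho) with rho by ring. apply ineq1; auto. }
  assert (A2 : 2 * rho * (1 / (2 * rho)) <= RInt (fun y => Re (g (rho, y))) (- rho) rho).
  { replace (2 * rho) with (rho - - rho) at 1 by ring. apply RInt_ge_c; [lra| |].
    apply CIok_re, ver_ok; [lra|]. intros; apply E2; auto.
    intros t Ht. unfold g. rewrite inv_formula_re by auto. rewrite Rplus_comm. apply ineq1; auto. }
  assert (A3 : 2 * rho * (1 / (2 * rho)) <= RInt (fun x => - Im (g (x, rho))) (- rho) rho).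
  { replace (2 * rho) with (rho - - rho) at 1 by ring. apply RInt_ge_c; [lra| |].
    apply (ex_RInt_opp (V:=R_CompleteNormedModule)). apply CIok_im, hor_ok; [lra|]. intros; apply E1; auto.
    intros t Ht. unfold g. rewrite inv_formula_im by auto.
    replace (- (- rho / (t ^ 2 + rho ^ 2))) with (rho / (t ^ 2 + rho ^ 2)) by (field; apply Hx; auto). apply ineq1; auto. }
  assert (A4 : 2 * rho * (1 / (2 * rho)) <= RInt (fun y => - Re (g (- rho, y))) (- rho) rho).
  { replace (2 * rho) with (rho - - rho) at 1 by ring. apply RInt_ge_c; [lra| |].
    apply (ex_RInt_opp (V:=R_CompleteNormedModule)). apply CIok_re, ver_ok; [lra|]. intros; apply E2; auto.
    intros t Ht. unfold g. rewrite inv_formula_re by (replace ((- rho) ^ 2) with (rho ^ 2) by ring; auto).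
    replace ((- rho) ^ 2) with (rho ^ 2) by ring.
    replace (- (- rho / (rho ^ 2 + t ^ 2))) with (rho / (t ^ 2 + rho ^ 2)) by (field; first [split; [apply Hx|apply Hx']; auto | apply Hx; auto | apply Hx'; auto]). apply ineq1; auto. }
  replace (2 * rho * (1 / (2 * rho))) with 1 in A1, A2, A3, A4 by (field; lra).
  rewrite (RInt_opp (V:=R_CompleteNormedModule)) in A3.
  2: { apply CIok_im, hor_ok; [lra|]. intros; apply E1; auto. }
  rewrite (RInt_opp (V:=R_CompleteNormedModule)) in A4.
  2: { apply CIok_re, ver_ok; [lra|]. intros; apply E2; auto. }
  intro E. apply (f_equal Im) in E. unfold T in E. rewrite Im_Rect in E. fold g in E.
  change (Im (RtoC 0)) with 0 in E.
  change (opp (RInt (fun x => Im (g (x, rho))) (- rho) rho)) with (- RInt (fun x => Im (g (x, rho))) (- rho) rho) in A3.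
  change (opp (RInt (fun y => Re (g (- rho, y))) (- rho) rho)) with (- RInt (fun y => Re (g (- rho, y))) (- rho) rho) in A4.
  assert (E' : RInt (fun x => Im (g (x, - rho))) (- rho) rho + RInt (fun y => Re (g (rho, y))) (- rho) rho
     - RInt (fun x => Im (g (x, rho))) (- rho) rho - RInt (fun y => Re (g (- rho, y))) (- rho) rho = 0) by exact E.
  lra.
Qed.

Lemma T_iter f rho k : 0 < rho -> SqCD f rho -> (forall n, (n < k)%nat -> T f rho n (RtoC 0) = RtoC 0) ->
  forall w, Cmod w < rho / 2 -> T f rho 0 w = (w ^ k * T f rho k w)%C.
Proof.
  intros Hr Hf. induction k; intros Hc w Hw.
  - simpl. ring.
  - rewrite IHk; auto. rewrite (T_rec f rho k w) by auto. rewrite Hc by lia. simpl. ring.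
Qed.

Theorem order_dich f r : 0 < r -> (forall z, Cmod z < r -> CDex f z) ->
  (exists eta, 0 < eta /\ forall w, Cmod w < eta -> f w = RtoC 0) \/
  (exists k (phi0 : C) Cc eta, phi0 <> RtoC 0 /\ 0 < eta /\
     forall w, Cmod w < eta -> Cmod (f w - phi0 * w ^ k) <= Cc * Cmod w ^ (S k)).
Proof.
  intros Hr Hf.
  set (rho := r / 3).
  assert (Hrho : 0 < rho) by (unfold rho; lra).
  assert (HSq : SqCD f rho).
  { intros x y Hx Hy. apply Hf. eapply Rle_lt_trans; [apply Cmod_le_abs|]. unfold Re, Im; simpl. unfold rho in *. lra. }
  assert (HSq1 : SqCD (fun _ => RtoC 1) rho) by (intros x y _ _; apply CDex_const).
  destruct (bd_bounded f rho Hrho HSq) as [Mf HMf].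
  set (M := Rmax Mf 0).
  assert (HM : forall z, bd rho z -> Cmod (f z) <= M) by (intros z Hz; eapply Rle_trans; [apply HMf; auto|apply Rmax_l]).
  assert (HM0 : 0 <= M) by apply Rmax_r.
  set (k0 := T (fun _ => RtoC 1) rho 0 (RtoC 0)).
  assert (Hk0 : k0 <> RtoC 0) by (apply K0_nonzero; auto).
  assert (Hk0p : 0 < Cmod k0) by (apply Cmod_gt_0; auto).
  set (eta := Rmin (rho / 2) (Cmod k0 * rho / 64)).
  assert (Heta : 0 < eta) by (unfold eta; apply Rmin_pos; [lra|]; apply Rdiv_lt_0_compat; [apply Rmult_lt_0_compat|]; lra).
  assert (Heta1 : eta <= rho / 2) by apply Rmin_l.
  assert (Heta2 : eta <= Cmod k0 * rho / 64) by apply Rmin_r.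
  assert (HK : forall w, Cmod w < eta ->
     T (fun _ => RtoC 1) rho 0 w = (k0 + w * T (fun _ => RtoC 1) rho 1 w)%C /\
     Cmod (T (fun _ => RtoC 1) rho 1 w) <= 32 / rho /\
     Cmod k0 / 2 <= Cmod (T (fun _ => RtoC 1) rho 0 w)).
  { intros w Hw.
    assert (E : T (fun _ => RtoC 1) rho 0 w = (k0 + w * T (fun _ => RtoC 1) rho 1 w)%C) by (apply T_rec; auto; lra).
    assert (B : Cmod (T (fun _ => RtoC 1) rho 1 w) <= 32 / rho).
    { replace (32 / rho) with (32 * 1 / rho ^ 1) by (simpl; field; lra).
      apply T_bound; auto; try lra. intros; rewrite Cmod_1; lra. }
    split; auto. split; auto.
    rewrite E. pose proof (Cmod_sub_tri k0 (- (w * T (fun _ : C => RtoC 1) rho 1 w))%C).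
    replace (k0 - - (w * T (fun _ : C => RtoC 1) rho 1 w))%C with (k0 + w * T (fun _ : C => RtoC 1) rho 1 w)%C in H by ring.
    rewrite Cmod_opp, Cmod_mult in H.
    assert (Cmod w * Cmod (T (fun _ : C => RtoC 1) rho 1 w) <= Cmod w * (32 / rho)).
    { apply Rmult_le_compat_l; auto using Cmod_ge_0. }
    assert (Cmod w * (32 / rho) <= Cmod k0 / 2).
    { apply Rle_trans with (Cmod k0 * rho / 64 * (32 / rho)). apply Rmult_le_compat_r. apply Rdiv_le_0_compat; lra. lra.
      right; field; lra. }
    lra. }
  destruct (classic (forall n, T f rho n (RtoC 0) = RtoC 0)) as [Hall|Hex].
  - left. exists eta. split; auto. intros w Hw.
    destruct (HK w Hw) as [_ [_ HKw]].
    assert (CF : (f w * T (fun _ => RtoC 1) rho 0 w)%C = T f rho 0 w) by (apply Cauchy_formula; auto; lra).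
    apply Cmod_eq_0. destruct (Rle_or_lt (Cmod (f w)) 0) as [H|H]; [pose proof (Cmod_ge_0 (f w)); lra|].
    exfalso.
    set (x := Cmod w / rho).
    assert (Hx0 : 0 <= x) by (unfold x; apply Rdiv_le_0_compat; auto using Cmod_ge_0).
    assert (Hx1 : x < 1) by (unfold x; apply Rmult_lt_reg_r with rho; auto; unfold Rdiv; rewrite Rmult_assoc, Rinv_l by lra; lra).
    set (y := Cmod (f w) * (Cmod k0 / 2) / (32 * M + 1)).
    assert (Hy : 0 < y) by (unfold y; apply Rdiv_lt_0_compat; [apply Rmult_lt_0_compat|]; lra).
    destruct (pow_lt_1_zero x ltac:(rewrite Rabs_pos_eq; auto) y Hy) as [N HN].
    specialize (HN N (Nat.le_refl N)). rewrite Rabs_pos_eq in HN by (apply pow_le; auto).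
    assert (It : T f rho 0 w = (w ^ N * T f rho N w)%C) by (apply T_iter; auto; lra).
    assert (Bd : Cmod (T f rho N w) <= 32 * M / rho ^ N) by (apply T_bound; auto; lra).
    assert (Hlhs : Cmod (f w) * (Cmod k0 / 2) <= 32 * M * x ^ N).
    { apply Rle_trans with (Cmod (f w) * Cmod (T (fun _ => RtoC 1) rho 0 w)).
      apply Rmult_le_compat_l; auto using Cmod_ge_0.
      rewrite <- Cmod_mult, CF, It, Cmod_mult, Cmod_pow.
      unfold x, Rdiv. rewrite Rpow_mult_distr, pow_inv.
      assert (0 < rho ^ N) by (apply pow_lt; auto).
      apply Rle_trans with (Cmod w ^ N * (32 * M / rho ^ N)).
      apply Rmult_le_compat_l; auto. apply pow_le, Cmod_ge_0.
      right; field; lra. }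
    assert (32 * M * x ^ N <= 32 * M * y) by (apply Rmult_le_compat_l; lra).
    assert (32 * M * y < Cmod (f w) * (Cmod k0 / 2)).
    { unfold y. apply Rlt_le_trans with ((32 * M + 1) * (Cmod (f w) * (Cmod k0 / 2) / (32 * M + 1))).
      apply Rmult_lt_compat_r; [|lra]. apply Rdiv_lt_0_compat; [apply Rmult_lt_0_compat|]; lra.
      right; field; lra. }
    lra.
  - right. apply not_all_ex_not in Hex.
    destruct (least_exists (fun n => T f rho n (RtoC 0) <> RtoC 0) Hex) as [k [Hk Hmin]].
    set (c := T f rho k (RtoC 0)).
    set (B1 := 32 * M / rho ^ (S k)).
    exists k, (c / k0)%C, (2 * (B1 * Cmod k0 + Cmod c * (32 / rho)) / (Cmod k0 * Cmod k0)), eta.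
    split. { intro E. apply Hk. fold c. apply (f_equal (fun u => u * k0)%C) in E.
      replace (c / k0 * k0)%C with c in E by (field; auto). rewrite E. ring. }
    split; auto. intros w Hw.
    destruct (HK w Hw) as [EK [BK HKw]].
    set (K := T (fun _ => RtoC 1) rho 0 w) in *. set (k1 := T (fun _ => RtoC 1) rho 1 w) in *.
    assert (HKnz : K <> RtoC 0) by (apply Cmod_gt_0; lra).
    assert (CF : (f w * K)%C = T f rho 0 w) by (apply Cauchy_formula; auto; lra).
    assert (It : T f rho 0 w = (w ^ k * T f rho k w)%C).
    { apply T_iter; auto; try lra. intros n Hn. apply NNPP. intro. apply (Hmin n); auto. }
    assert (Rc : T f rho k w = (c + w * T f rho (S k) w)%C) by (apply T_rec; auto; lra).
    set (t := T f rho (S k) w) in *.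
    assert (Bt : Cmod t <= B1) by (apply T_bound; auto; lra).
    assert (Ef : f w = (w ^ k * (c + w * t) / K)%C).
    { rewrite <- Rc, <- It, <- CF. field. auto. }
    assert (Eq : (f w - c / k0 * w ^ k)%C = (w ^ (S k) * (t * k0 - c * k1) / (K * k0))%C).
    { rewrite Ef. simpl. rewrite EK. field. split; auto. rewrite <- EK. auto. }
    rewrite Eq. rewrite Cmod_div by (apply Cmult_neq_0; auto).
    rewrite !Cmod_mult, Cmod_pow.
    assert (Hn : Cmod (t * k0 - c * k1) <= B1 * Cmod k0 + Cmod c * (32 / rho)).
    { replace (t * k0 - c * k1)%C with (t * k0 + - (c * k1))%C by ring.
      eapply Rle_trans; [apply Cmod_triangle|]. rewrite Cmod_opp, !Cmod_mult.
      apply Rplus_le_compat; apply Rmult_le_compat; auto using Cmod_ge_0; lra. }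
    pose proof (pow_le (Cmod w) (S k) (Cmod_ge_0 w)).
    apply Rle_trans with (Cmod w ^ S k * (B1 * Cmod k0 + Cmod c * (32 / rho)) / (Cmod k0 / 2 * Cmod k0)).
    + unfold Rdiv. apply Rmult_le_compat. apply Rmult_le_pos; auto using Cmod_ge_0.
      left; apply Rinv_0_lt_compat; apply Rmult_lt_0_compat; lra.
      apply Rmult_le_compat_l; auto.
      apply Rinv_le_contravar. apply Rmult_lt_0_compat; lra. apply Rmult_le_compat_r; lra.
    + right. field. lra.
Qed.

Lemma ball_C_of_Cmod (x y : C) (e : R) : Cmod (y - x) < e -> ball x e y.
Proof. intros H. apply C_NormedModule_mixin_compat1. exact H. Qed.

Lemma Cmod_of_ball (x y : C) (e : R) : ball x e y -> Cmod (y - x) < 2 * e.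
Proof.
  intros [H1 H2]. change (Rabs (fst y - fst x) < e) in H1. change (Rabs (snd y - snd x) < e) in H2.
  eapply Rle_lt_trans; [apply Cmod_le_abs|].
  replace (Re (y - x)%C) with (fst y - fst x) by (unfold Re; simpl; ring).
  replace (Im (y - x)%C) with (snd y - snd x) by (unfold Im; simpl; ring). lra.
Qed.

Lemma locally_C_Cmod (x : C) (P : C -> Prop) : locally x P -> exists d, 0 < d /\ forall y, Cmod (y - x) < d -> P y.
Proof.
  intros [e He]. exists e. split; [apply cond_pos|]. intros y Hy. apply He, ball_C_of_Cmod; auto.
Qed.

Lemma locally2 (Q : C * C -> Prop) : (exists d, 0 < d /\ forall z w, Cmod z < d -> Cmod w < d -> Q (z, w)) ->
  locally (RtoC 0, RtoC 0) Q.
Proof.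
  intros [d [Hd H]]. exists (mkposreal (d / 2) ltac:(lra)). intros [z w] [Hz Hw]. simpl in *.
  apply Cmod_of_ball in Hz. apply Cmod_of_ball in Hw.
  replace (z - 0)%C with z in Hz by ring. replace (w - 0)%C with w in Hw by ring.
  apply H; lra.
Qed.

Lemma locally2_inv (Q : C * C -> Prop) : locally (RtoC 0, RtoC 0) Q ->
  exists d, 0 < d /\ forall z w, Cmod z < d -> Cmod w < d -> Q (z, w).
Proof.
  intros [e He]. exists e. split; [apply cond_pos|]. intros z w Hz Hw. apply He. split.
  - apply ball_C_of_Cmod. change (Cmod (z - 0) < e). replace (z - 0)%C with z by ring. auto.
  - apply ball_C_of_Cmod. change (Cmod (w - 0) < e). replace (w - 0)%C with w by ring. auto.
Qed.

Lemma is_derive_CD (g : C -> C) x l :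
  is_derive (K := C_AbsRing) (V := C_NormedModule) g x l -> CD g x l.
Proof.
  intros [_ H]. specialize (H x (fun P HP => HP)).
  intros eps He. specialize (H (mkposreal eps He)).
  destruct H as [d Hy]. exists d; split; [apply cond_pos|].
  intros y Hy'. specialize (Hy y Hy'). simpl in Hy.
  change (Cmod (g y - g x - (y - x) * l)%C <= eps * Cmod (y - x)%C) in Hy.
  replace (g y - g x - l * (y - x))%C with (g y - g x - (y - x) * l)%C by ring. auto.
Qed.

Lemma open_ball (D : C -> Prop) : open D -> D (RtoC 0) -> exists r, 0 < r /\ forall z, Cmod z < r -> D z.
Proof.
  intros Ho H0. destruct (locally_C_Cmod _ _ (Ho _ H0)) as [d [Hd Hy]]. exists d; split; auto.
  intros z Hz. apply Hy. replace (z - 0)%C with z by ring. auto.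
Qed.

Lemma holo_w (D : C -> Prop) (f : C * C -> C) z0 w0 :
  holomorphic2 D D f -> D z0 -> D w0 -> CDex (fun w => f (z0, w)) w0.
Proof.
  intros Hh Hz Hw. specialize (Hh (z0, w0) Hz Hw).
  assert (H : ex_filterdiff (K := C_AbsRing) (U := AbsRing_NormedModule C_AbsRing) (V := C_NormedModule) (fun w : C => f (z0, w)) (@locally (AbsRing_UniformSpace C_AbsRing) w0)).
  { apply (ex_filterdiff_comp'_2 (K := C_AbsRing) (T := AbsRing_NormedModule C_AbsRing) (U := C_NormedModule) (V := C_NormedModule)
      (fun _ => z0) (fun w => w) (fun a b => f (a, b)) w0).
    - apply ex_filterdiff_const; try apply locally_filter.
    - apply ex_filterdiff_linear. apply Build_is_linear.
      + intros; reflexivity.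
      + intros; reflexivity.
      + exists 1; split; [lra|]. intros x. simpl. change (Cmod x <= 1 * Cmod x). lra.
    - eapply ex_filterdiff_ext; [|exact Hh]. intros [a b]; reflexivity. }
  apply (proj2 (ex_derive_filterdiff _ _)) in H. destruct H as [l Hl]. exists l. apply is_derive_CD; auto.
Qed.

Lemma holo_bound (D : C -> Prop) (f : C * C -> C) :
  holomorphic2 D D f -> D (RtoC 0) -> exists d S, 0 < d /\ forall z w, Cmod z < d -> Cmod w < d -> Cmod (f (z, w)) <= S.
Proof.
  intros Hh H0. specialize (Hh (RtoC 0, RtoC 0) H0 H0).
  pose proof (filterdiff_continuous (K:=C_AbsRing) (U:=prod_NormedModule C_AbsRing C_NormedModule C_NormedModule) (V:=C_NormedModule) f _ Hh) as Hc.
  pose proof (proj1 (filterlim_locally _ _) Hc (mkposreal 1 Rlt_0_1)) as H.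
  destruct (locally2_inv _ H) as [d [Hd Hy]].
  exists d, (Cmod (f (RtoC 0, RtoC 0)) + 2). split; auto. intros z w Hz Hw.
  specialize (Hy z w Hz Hw). apply Cmod_of_ball in Hy. simpl in Hy.
  pose proof (Cmod_sub_tri (f (z, w)) (f (RtoC 0, RtoC 0))). lra.
Qed.

Lemma partial_CD (f g : C * C -> C) z w : is_partial_z f (z, w) (g (z, w)) -> CD (fun u => f (u, w)) z (g (z, w)).
Proof. intros H. apply is_derive_CD. exact H. Qed.

Lemma mvt_R (f df : R -> R) a b M : a <= b ->
  (forall t, a <= t <= b -> is_derive f t (df t)) -> (forall t, a <= t <= b -> Rabs (df t) <= M) ->
  Rabs (f b - f a) <= M * (b - a).
Proof.
  intros Hab HD HM.
  destruct (MVT_gen f a b df) as [c [Hc E]].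
  - intros x Hx. rewrite Rmin_left, Rmax_right in Hx by auto. apply HD; lra.
  - intros x Hx. rewrite Rmin_left, Rmax_right in Hx by auto. apply continuity_pt_filterlim.
    apply (ex_derive_continuous (K:=R_AbsRing) (V:=R_NormedModule)). eexists; apply HD; auto.
  - rewrite Rmin_left, Rmax_right in Hc by auto. rewrite E, Rabs_mult, (Rabs_pos_eq (b - a)) by lra.
    apply Rmult_le_compat_r; [lra|]. apply HM; auto.
Qed.

Lemma mvt_C (phi dphi : R -> C) a b M : a <= b ->
  (forall t, a <= t <= b -> is_derive (fun s => Re (phi s)) t (Re (dphi t)) /\
                            is_derive (fun s => Im (phi s)) t (Im (dphi t))) ->
  (forall t, a <= t <= b -> Cmod (dphi t) <= M) ->
  Cmod (phi b - phi a) <= 2 * M * (b - a).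
Proof.
  intros Hab HD HM. eapply Rle_trans; [apply Cmod_le_abs|].
  replace (Re (phi b - phi a)%C) with (Re (phi b) - Re (phi a)) by (unfold Re; simpl; ring).
  replace (Im (phi b - phi a)%C) with (Im (phi b) - Im (phi a)) by (unfold Im; simpl; ring).
  assert (A : Rabs (Re (phi b) - Re (phi a)) <= M * (b - a)).
  { apply (mvt_R (fun s => Re (phi s)) (fun s => Re (dphi s))); auto. intros; apply HD; auto.
    intros; eapply Rle_trans; [apply Re_le|apply HM; auto]. }
  assert (B : Rabs (Im (phi b) - Im (phi a)) <= M * (b - a)).
  { apply (mvt_R (fun s => Im (phi s)) (fun s => Im (dphi s))); auto. intros; apply HD; auto.
    intros; eapply Rle_trans; [apply Im_le|apply HM; auto]. }
  lra.
Qed.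

Lemma line_pt (t : R) (z : C) : Cmod (RtoC 0 + RtoC t * z)%C = Rabs t * Cmod z.
Proof. replace (RtoC 0 + RtoC t * z)%C with (RtoC t * z)%C by ring. rewrite Cmod_mult, Cmod_R. auto. Qed.

Theorem ode_est (nu s nuz nuzz : C * C -> C) (r S : R) (w z : C) :
  0 < r -> 0 <= S ->
  (forall u, Cmod u < r -> CD (fun v => nu (v, w)) u (nuz (u, w))) ->
  (forall u, Cmod u < r -> CD (fun v => nuz (v, w)) u (nuzz (u, w))) ->
  (forall u, Cmod u < r -> nuzz (u, w) = (- (s (u, w) / 2) * nu (u, w))%C) ->
  (forall u, Cmod u < r -> Cmod (s (u, w)) <= S) ->
  Cmod z < r -> 2 * S * (Cmod z * Cmod z) <= 1 / 2 ->
  Cmod (nu (z, w) - nu (RtoC 0, w) - z * nuz (RtoC 0, w))%C <=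
     4 * S * (Cmod z * Cmod z) * (Cmod (nu (RtoC 0, w)) + Cmod z * Cmod (nuz (RtoC 0, w))) /\
  Cmod (z * (nuz (z, w) - nuz (RtoC 0, w)))%C <=
     2 * S * (Cmod z * Cmod z) * (Cmod (nu (RtoC 0, w)) + Cmod z * Cmod (nuz (RtoC 0, w))).
Proof.
  intros Hr HS H1 H2 Hode Hs Hz Hsm.
  set (pt := fun t : R => (RtoC 0 + RtoC t * z)%C).
  assert (Hpt : forall t, 0 <= t <= 1 -> Cmod (pt t) < r).
  { intros t Ht. unfold pt. rewrite line_pt. rewrite Rabs_pos_eq by lra.
    pose proof (Cmod_ge_0 z). nra. }
  set (g := fun t : R => nu (pt t, w)).
  set (h := fun t : R => (z * nuz (pt t, w))%C).
  set (a := nu (RtoC 0, w)). set (b := nuz (RtoC 0, w)).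
  assert (Hpt0 : pt 0 = RtoC 0) by (unfold pt; ring).
  assert (Hpt1 : pt 1 = z) by (unfold pt; ring).
  assert (Hg0 : g 0 = a) by (unfold g, a; rewrite Hpt0; auto).
  assert (Hg1 : g 1 = nu (z, w)) by (unfold g; rewrite Hpt1; auto).
  assert (Hh0 : h 0 = (z * b)%C) by (unfold h, b; rewrite Hpt0; auto).
  assert (Hh1 : h 1 = (z * nuz (z, w))%C) by (unfold h; rewrite Hpt1; auto).
  assert (Dg : forall t, 0 <= t <= 1 -> is_derive (fun s => Re (g s)) t (Re (h t)) /\
                                         is_derive (fun s => Im (g s)) t (Im (h t))).
  { intros t Ht. apply (CD_line (fun v => nu (v, w)) (RtoC 0) z t). apply H1, Hpt; auto. }
  assert (Dh : forall t, 0 <= t <= 1 -> is_derive (fun s => Re (h s)) t (Re (z * (z * nuzz (pt t, w)))%C) /\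
                                         is_derive (fun s => Im (h s)) t (Im (z * (z * nuzz (pt t, w)))%C)).
  { intros t Ht. apply (CD_line (fun v => z * nuz (v, w))%C (RtoC 0) z t). apply CD_scal, H2, Hpt; auto. }
  destruct (continuity_ab_maj (fun t => Cmod (g t)) 0 1) as [tm [Htm1 Htm]]; [lra| |].
  { intros c Hc. apply Rcont_cmod. unfold g. apply (Ccont_line (fun v => nu (v, w)) (RtoC 0) z c).
    eapply CD_cont. apply H1, Hpt; auto. }
  set (G := Cmod (g tm)).
  assert (HG0 : 0 <= G) by apply Cmod_ge_0.
  set (E := Cmod a + Cmod z * Cmod b).
  assert (Hdh : forall t, 0 <= t <= 1 -> Cmod (z * (z * nuzz (pt t, w)))%C <= S / 2 * (Cmod z * Cmod z) * G).
  { intros t Ht. rewrite Hode by (apply Hpt; auto). rewrite !Cmod_mult.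
    rewrite Cmod_opp, Cmod_div by (intro E'; injection E'; lra).
    replace (Cmod 2) with 2 by (rewrite Cmod_R, Rabs_pos_eq; lra).
    pose proof (Hs (pt t) (Hpt t Ht)). pose proof (Htm1 t Ht). fold G in H0. unfold g in H0.
    pose proof (Cmod_ge_0 z). pose proof (Cmod_ge_0 (s (pt t, w))). pose proof (Cmod_ge_0 (nu (pt t, w))).
    assert (Cmod (s (pt t, w)) / 2 * Cmod (nu (pt t, w)) <= S / 2 * G).
    { apply Rmult_le_compat; try lra. }
    assert (0 <= Cmod (s (pt t, w)) / 2 * Cmod (nu (pt t, w))) by (apply Rmult_le_pos; lra).
    assert (0 <= Cmod z * Cmod z) by nra.
    apply Rle_trans with ((Cmod z * Cmod z) * (S / 2 * G)); [|right; ring].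
    replace (Cmod z * (Cmod z * (Cmod (s (pt t, w)) / 2 * Cmod (nu (pt t, w)))))
      with ((Cmod z * Cmod z) * (Cmod (s (pt t, w)) / 2 * Cmod (nu (pt t, w)))) by ring.
    apply Rmult_le_compat_l; lra. }
  assert (Bh : forall t, 0 <= t <= 1 -> Cmod (h t - h 0) <= S * (Cmod z * Cmod z) * G).
  { intros t Ht. eapply Rle_trans.
    apply (mvt_C h (fun t => z * (z * nuzz (pt t, w)))%C 0 t (S / 2 * (Cmod z * Cmod z) * G)); [lra| |].
    intros; apply Dh; lra. intros; apply Hdh; lra.
    assert (0 <= S / 2 * (Cmod z * Cmod z) * G) by (apply Rmult_le_pos; [apply Rmult_le_pos|]; nra).
    nra. }
  assert (Bg : forall t, 0 <= t <= 1 -> Cmod (g t - a - RtoC t * (z * b)) <= 2 * S * (Cmod z * Cmod z) * G).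
  { intros t Ht.
    set (phi := fun s : R => (g s - RtoC s * (z * b))%C).
    assert (E1 : (g t - a - RtoC t * (z * b))%C = (phi t - phi 0)%C).
    { unfold phi. rewrite Hg0. replace (RtoC 0 * (z * b))%C with (RtoC 0) by ring. ring. }
    rewrite E1. eapply Rle_trans.
    apply (mvt_C phi (fun s => h s - h 0)%C 0 t (S * (Cmod z * Cmod z) * G)); [lra| |].
    - intros u Hu. destruct (Dg u ltac:(lra)) as [A B]. rewrite Hh0. split.
      + assert (Hd : is_derive (fun s => minus (Re (g s)) (Re (z * b)%C * s)) u (minus (Re (h u)) (Re (z * b)%C * 1))).
        { apply (is_derive_minus (K:=R_AbsRing) (V:=R_NormedModule)); auto.
          apply (is_derive_scal (fun t => t)). apply is_derive_Reals; apply derivable_pt_lim_id. }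
        eapply is_derive_ext; [|replace (Re (h u - z * b)%C) with (minus (Re (h u)) (Re (z * b)%C * 1)); [exact Hd|]].
        * intros s0. unfold phi, minus, plus, opp; simpl. unfold Re; simpl. ring.
        * unfold minus, plus, opp; simpl. unfold Re; simpl. ring.
      + assert (Hd : is_derive (fun s => minus (Im (g s)) (Im (z * b)%C * s)) u (minus (Im (h u)) (Im (z * b)%C * 1))).
        { apply (is_derive_minus (K:=R_AbsRing) (V:=R_NormedModule)); auto.
          apply (is_derive_scal (fun t => t)). apply is_derive_Reals; apply derivable_pt_lim_id. }
        eapply is_derive_ext; [|replace (Im (h u - z * b)%C) with (minus (Im (h u)) (Im (z * b)%C * 1)); [exact Hd|]].
        * intros s0. unfold phi, minus, plus, opp; simpl. unfold Im; simpl. ring.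
        * unfold minus, plus, opp; simpl. unfold Im; simpl. ring.
    - intros u Hu. apply Bh; lra.
    - assert (0 <= S * (Cmod z * Cmod z) * G) by (apply Rmult_le_pos; [apply Rmult_le_pos|]; nra). nra. }
  assert (HGE : G <= 2 * E).
  { specialize (Bg tm Htm). fold G in Bg |- *.
    pose proof (Cmod_sub_tri (g tm) (a + RtoC tm * (z * b))%C).
    replace (g tm - (a + RtoC tm * (z * b)))%C with (g tm - a - RtoC tm * (z * b))%C in H by ring.
    assert (Cmod (a + RtoC tm * (z * b))%C <= E).
    { eapply Rle_trans; [apply Cmod_triangle|]. rewrite !Cmod_mult, Cmod_R, Rabs_pos_eq by lra.
      unfold E. assert (0 <= Cmod z * Cmod b) by (apply Rmult_le_pos; apply Cmod_ge_0).
      assert (tm * (Cmod z * Cmod b) <= 1 * (Cmod z * Cmod b)) by (apply Rmult_le_compat_r; lra). lra. }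
    fold G in H. nra. }
  split.
  - specialize (Bg 1 ltac:(lra)). rewrite Hg1 in Bg.
    replace (RtoC 1 * (z * b))%C with (z * b)%C in Bg by ring. fold a b E.
    eapply Rle_trans; [exact Bg|].
    replace (4 * S * (Cmod z * Cmod z) * E) with (2 * S * (Cmod z * Cmod z) * (2 * E)) by ring.
    apply Rmult_le_compat_l; [|lra]. pose proof (Cmod_ge_0 z). apply Rmult_le_pos; [lra|nra].
  - specialize (Bh 1 ltac:(lra)). rewrite Hh1, Hh0 in Bh.
    replace (z * (nuz (z, w) - b))%C with (z * nuz (z, w) - z * b)%C by ring. fold b E.
    eapply Rle_trans; [exact Bh|].
    replace (2 * S * (Cmod z * Cmod z) * E) with (S * (Cmod z * Cmod z) * (2 * E)) by ring.
    apply Rmult_le_compat_l; [|lra]. pose proof (Cmod_ge_0 z). apply Rmult_le_pos; [lra|nra].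
Qed.

Definition DI (f g : C -> C) : Prop := exists L : C, forall eps, 0 < eps -> exists eta, 0 < eta /\
  forall w, Cmod w < eta -> Cmod (g w - L * f w) <= eps * Cmod (f w).
Definition DII (f g : C -> C) : Prop := forall eps, 0 < eps -> exists eta, 0 < eta /\
  forall w, Cmod w < eta -> Cmod (f w) <= eps * Cmod (g w).

Definition ORD (f : C -> C) (k : nat) (phi Cc eta : R) : Prop := True.

Lemma ord_lower (f : C -> C) k (phi : C) Cc eta : phi <> RtoC 0 -> 0 < eta ->
  (forall w, Cmod w < eta -> Cmod (f w - phi * w ^ k) <= Cc * Cmod w ^ (S k)) ->
  exists eta', 0 < eta' /\ eta' <= 1 /\ forall w, Cmod w < eta' ->
     Cmod phi / 2 * Cmod w ^ k <= Cmod (f w) /\ Cmod (f w) <= (Cmod phi + Rabs Cc) * Cmod w ^ k.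
Proof.
  intros Hphi Heta H. assert (Hp : 0 < Cmod phi) by (apply Cmod_gt_0; auto).
  exists (Rmin (Rmin eta 1) (Cmod phi / (2 * (Rabs Cc + 1)))).
  assert (HC : 0 <= Rabs Cc) by apply Rabs_pos.
  split. { repeat apply Rmin_pos; try lra. apply Rdiv_lt_0_compat; lra. }
  split. { eapply Rle_trans; [apply Rmin_l|apply Rmin_r]. }
  intros w Hw.
  assert (Hw1 : Cmod w < eta) by (eapply Rlt_le_trans; [exact Hw|]; eapply Rle_trans; [apply Rmin_l|apply Rmin_l]).
  assert (Hw2 : Cmod w < 1) by (eapply Rlt_le_trans; [exact Hw|]; eapply Rle_trans; [apply Rmin_l|apply Rmin_r]).
  assert (Hw3 : Cmod w < Cmod phi / (2 * (Rabs Cc + 1))) by (eapply Rlt_le_trans; [exact Hw|apply Rmin_r]).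
  specialize (H w Hw1). simpl in H.
  pose proof (Cmod_ge_0 w). assert (Hpk : 0 <= Cmod w ^ k) by (apply pow_le; lra).
  assert (Hrem : Cc * (Cmod w * Cmod w ^ k) <= Rabs Cc * Cmod w * Cmod w ^ k).
  { rewrite Rmult_assoc. apply Rmult_le_compat_r. apply Rmult_le_pos; lra. apply Rle_abs. }
  assert (Hsmall : Rabs Cc * Cmod w <= Cmod phi / 2).
  { apply Rle_trans with ((Rabs Cc + 1) * (Cmod phi / (2 * (Rabs Cc + 1)))).
    apply Rmult_le_compat; lra. right; field; lra. }
  assert (Hpw : Cmod (phi * w ^ k)%C = Cmod phi * Cmod w ^ k) by (rewrite Cmod_mult, Cmod_pow; auto).
  pose proof (Cmod_sub_tri (phi * w ^ k)%C (f w)).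
  replace (phi * w ^ k - f w)%C with (- (f w - phi * w ^ k))%C in H1 by ring. rewrite Cmod_opp in H1.
  pose proof (Cmod_sub_tri (f w) (phi * w ^ k)%C).
  split.
  - assert (Rabs Cc * Cmod w * Cmod w ^ k <= Cmod phi / 2 * Cmod w ^ k) by (apply Rmult_le_compat_r; auto).
    lra.
  - assert (Rabs Cc * Cmod w * Cmod w ^ k <= Rabs Cc * Cmod w ^ k).
    { rewrite Rmult_assoc. apply Rmult_le_compat_l; auto. rewrite <- (Rmult_1_l (Cmod w ^ k)) at 2.
      apply Rmult_le_compat_r; lra. }
    lra.
Qed.

Lemma pow_le_one (x : R) n : 0 <= x <= 1 -> x ^ n <= 1.
Proof. intros Hx. induction n; simpl; [lra|]. assert (0 <= x ^ n) by (apply pow_le; lra). nra. Qed.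

Lemma pow_le_succ (x : R) k m : 0 <= x <= 1 -> (k < m)%nat -> x ^ m <= x * x ^ k.
Proof.
  intros Hx Hkm. replace m with (S k + (m - S k))%nat by lia. rewrite pow_add. simpl.
  rewrite <- (Rmult_1_r (x * x ^ k)) at 2. apply Rmult_le_compat_l.
  apply Rmult_le_pos; [lra|apply pow_le; lra]. apply pow_le_one; lra.
Qed.

Lemma pair_dich f g r : 0 < r -> (forall z, Cmod z < r -> CDex f z) -> (forall z, Cmod z < r -> CDex g z) ->
  DI f g \/ DII f g.
Proof.
  intros Hr Hf Hg.
  destruct (order_dich f r Hr Hf) as [[ef [Hef Hf0]] | [kf [pf [Cf [ef [Hpf [Hef Hfo]]]]]]].
  { right. intros eps He. exists ef. split; auto. intros w Hw. rewrite Hf0, Cmod_0 by auto.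
    apply Rmult_le_pos; [lra|apply Cmod_ge_0]. }
  destruct (order_dich g r Hr Hg) as [[eg [Heg Hg0]] | [kg [pg [Cg [eg [Hpg [Heg Hgo]]]]]]].
  { left. exists (RtoC 0). intros eps He. exists eg. split; auto. intros w Hw. rewrite Hg0 by auto.
    replace (RtoC 0 - RtoC 0 * f w)%C with (RtoC 0) by ring. rewrite Cmod_0.
    apply Rmult_le_pos; [lra|apply Cmod_ge_0]. }
  destruct (ord_lower f kf pf Cf ef Hpf Hef Hfo) as [ef' [Hef' [Hef1 Hfb]]].
  destruct (ord_lower g kg pg Cg eg Hpg Heg Hgo) as [eg' [Heg' [Heg1 Hgb]]].
  assert (Hpfp : 0 < Cmod pf) by (apply Cmod_gt_0; auto).
  assert (Hpgp : 0 < Cmod pg) by (apply Cmod_gt_0; auto).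
  destruct (Compare_dec.lt_eq_lt_dec kf kg) as [[Hlt|Heq]|Hgt].
  - left. exists (RtoC 0). intros eps He.
    set (Ag := Cmod pg + Rabs Cg). assert (HAg : 0 <= Ag) by (unfold Ag; pose proof (Rabs_pos Cg); lra).
    set (e3 := eps * Cmod pf / (2 * (Ag + 1))).
    assert (He3 : 0 < e3) by (unfold e3; apply Rdiv_lt_0_compat; [apply Rmult_lt_0_compat|]; lra).
    exists (Rmin (Rmin ef' eg') e3). split; [repeat apply Rmin_pos; auto|]. intros w Hw.
    assert (Hw1 : Cmod w < ef') by (eapply Rlt_le_trans; [exact Hw|]; eapply Rle_trans; [apply Rmin_l|apply Rmin_l]).
    assert (Hw2 : Cmod w < eg') by (eapply Rlt_le_trans; [exact Hw|]; eapply Rle_trans; [apply Rmin_l|apply Rmin_r]).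
    assert (Hw3 : Cmod w < e3) by (eapply Rlt_le_trans; [exact Hw|apply Rmin_r]).
    destruct (Hfb w Hw1) as [F1 _]. destruct (Hgb w Hw2) as [_ G2].
    replace (g w - RtoC 0 * f w)%C with (g w) by ring. fold Ag in G2.
    pose proof (Cmod_ge_0 w). assert (0 <= Cmod w ^ kf) by (apply pow_le; lra).
    assert (Cmod w ^ kg <= Cmod w * Cmod w ^ kf) by (apply pow_le_succ; auto; lra).
    assert (Ag * Cmod w <= eps * (Cmod pf / 2)).
    { apply Rle_trans with ((Ag + 1) * e3). apply Rmult_le_compat; lra. unfold e3. right; field; lra. }
    apply Rle_trans with (Ag * (Cmod w * Cmod w ^ kf)). eapply Rle_trans; [exact G2|]. apply Rmult_le_compat_l; auto.
    apply Rle_trans with (eps * (Cmod pf / 2 * Cmod w ^ kf)). 2: apply Rmult_le_compat_l; lra.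
    rewrite <- Rmult_assoc. rewrite <- (Rmult_assoc eps). apply Rmult_le_compat_r; auto.
  - subst kg. left. exists (pg / pf)%C. intros eps He.
    set (A := Rabs Cg + Cmod (pg / pf)%C * Rabs Cf).
    assert (HA : 0 <= A) by (unfold A; pose proof (Rabs_pos Cg); pose proof (Rabs_pos Cf); pose proof (Cmod_ge_0 (pg / pf)%C); nra).
    set (e3 := eps * Cmod pf / (2 * (A + 1))).
    assert (He3 : 0 < e3) by (unfold e3; apply Rdiv_lt_0_compat; [apply Rmult_lt_0_compat|]; lra).
    exists (Rmin (Rmin ef' eg') (Rmin (Rmin ef eg) e3)). split; [repeat apply Rmin_pos; auto|]. intros w Hw.
    pose proof (Rmin_l (Rmin ef' eg') (Rmin (Rmin ef eg) e3)). pose proof (Rmin_r (Rmin ef' eg') (Rmin (Rmin ef eg) e3)).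
    pose proof (Rmin_l ef' eg'). pose proof (Rmin_r ef' eg'). pose proof (Rmin_l (Rmin ef eg) e3).
    pose proof (Rmin_r (Rmin ef eg) e3). pose proof (Rmin_l ef eg). pose proof (Rmin_r ef eg).
    destruct (Hfb w ltac:(lra)) as [F1 _].
    specialize (Hfo w ltac:(lra)). specialize (Hgo w ltac:(lra)). simpl in Hfo, Hgo.
    replace (g w - pg / pf * f w)%C with ((g w - pg * w ^ kf) - pg / pf * (f w - pf * w ^ kf))%C by (field; auto).
    pose proof (Cmod_ge_0 w). assert (0 <= Cmod w ^ kf) by (apply pow_le; lra).
    eapply Rle_trans. replace ((g w - pg * w ^ kf) - pg / pf * (f w - pf * w ^ kf))%C with
       ((g w - pg * w ^ kf) + - (pg / pf * (f w - pf * w ^ kf)))%C by ring.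
    apply Cmod_triangle. rewrite Cmod_opp, Cmod_mult.
    assert (Cg * (Cmod w * Cmod w ^ kf) <= Rabs Cg * (Cmod w * Cmod w ^ kf)) by (apply Rmult_le_compat_r; [nra|apply Rle_abs]).
    assert (Cf * (Cmod w * Cmod w ^ kf) <= Rabs Cf * (Cmod w * Cmod w ^ kf)) by (apply Rmult_le_compat_r; [nra|apply Rle_abs]).
    assert (Cmod (pg / pf)%C * Cmod (f w - pf * w ^ kf)%C <= Cmod (pg / pf)%C * (Rabs Cf * (Cmod w * Cmod w ^ kf))).
    { apply Rmult_le_compat_l. apply Cmod_ge_0. lra. }
    assert (A * Cmod w <= eps * (Cmod pf / 2)).
    { apply Rle_trans with ((A + 1) * e3). apply Rmult_le_compat; lra. unfold e3. right; field; lra. }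
    apply Rle_trans with (A * Cmod w * Cmod w ^ kf).
    { unfold A. nra. }
    apply Rle_trans with (eps * (Cmod pf / 2 * Cmod w ^ kf)). 2: apply Rmult_le_compat_l; lra.
    rewrite <- (Rmult_assoc eps). apply Rmult_le_compat_r; auto.
  - right. intros eps He.
    set (Af := Cmod pf + Rabs Cf). assert (HAf : 0 <= Af) by (unfold Af; pose proof (Rabs_pos Cf); lra).
    set (e3 := eps * Cmod pg / (2 * (Af + 1))).
    assert (He3 : 0 < e3) by (unfold e3; apply Rdiv_lt_0_compat; [apply Rmult_lt_0_compat|]; lra).
    exists (Rmin (Rmin ef' eg') e3). split; [repeat apply Rmin_pos; auto|]. intros w Hw.
    assert (Hw1 : Cmod w < ef') by (eapply Rlt_le_trans; [exact Hw|]; eapply Rle_trans; [apply Rmin_l|apply Rmin_l]).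
    assert (Hw2 : Cmod w < eg') by (eapply Rlt_le_trans; [exact Hw|]; eapply Rle_trans; [apply Rmin_l|apply Rmin_r]).
    assert (Hw3 : Cmod w < e3) by (eapply Rlt_le_trans; [exact Hw|apply Rmin_r]).
    destruct (Hfb w Hw1) as [_ F2]. destruct (Hgb w Hw2) as [G1 _]. fold Af in F2.
    pose proof (Cmod_ge_0 w). assert (0 <= Cmod w ^ kg) by (apply pow_le; lra).
    assert (Cmod w ^ kf <= Cmod w * Cmod w ^ kg) by (apply pow_le_succ; auto; lra).
    assert (Af * Cmod w <= eps * (Cmod pg / 2)).
    { apply Rle_trans with ((Af + 1) * e3). apply Rmult_le_compat; lra. unfold e3. right; field; lra. }
    apply Rle_trans with (Af * (Cmod w * Cmod w ^ kg)). eapply Rle_trans; [exact F2|]. apply Rmult_le_compat_l; auto.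
    apply Rle_trans with (eps * (Cmod pg / 2 * Cmod w ^ kg)). 2: apply Rmult_le_compat_l; lra.
    rewrite <- Rmult_assoc. rewrite <- (Rmult_assoc eps). apply Rmult_le_compat_r; auto.
Qed.

Lemma lim_le (u : nat -> R) l c B N : Un_cv u l -> (forall m, (m >= N)%nat -> Rabs (c - u m) <= B) -> Rabs (c - l) <= B.
Proof.
  intros Hu H. destruct (Rle_or_lt (Rabs (c - l)) B) as [HB|HB]; auto. exfalso.
  destruct (Hu (Rabs (c - l) - B)) as [N' HN']; [lra|].
  specialize (HN' (Nat.max N N') ltac:(lia)). specialize (H (Nat.max N N') ltac:(lia)).
  unfold Rdist in HN'. pose proof (Rabs_triang (c - u (Nat.max N N')) (u (Nat.max N N') - l)).
  replace (c - u (Nat.max N N') + (u (Nat.max N N') - l)) with (c - l) in H0 by ring. lra.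
Qed.

Lemma Cmod_sub3 (x y z : C) : Cmod (x - z) <= Cmod (x - y) + Cmod (y - z).
Proof. replace (x - z)%C with ((x - y) + (y - z))%C by ring. apply Cmod_triangle. Qed.

Theorem htrick (a b : C -> C) (d : R -> C -> C) (C0 h0 eta0 : R) :
  0 <= C0 -> 0 < h0 -> 0 < eta0 ->
  (forall h, 0 < h < h0 -> forall w, Cmod w < eta0 ->
     Cmod (d h w - RtoC h * b w) <= C0 * (h * h) * (Cmod (a w) + h * Cmod (b w))) ->
  (forall h, 0 < h < h0 -> DI a (d h) \/ DII a (d h)) ->
  DI a b \/ DII a b.
Proof.
  intros HC0 Hh0 Heta0 Happ Hdich.
  set (h1 := Rmin (h0 / 2) (Rmin (1 / 2) (1 / (2 * (C0 + 1))))).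
  assert (Hh1 : 0 < h1) by (unfold h1; repeat apply Rmin_pos; try lra; apply Rdiv_lt_0_compat; lra).
  assert (Hh1a : h1 <= h0 / 2) by apply Rmin_l.
  assert (Hh1b : h1 <= 1 / 2) by (eapply Rle_trans; [apply Rmin_r|apply Rmin_l]).
  assert (Hh1c : h1 <= 1 / (2 * (C0 + 1))) by (eapply Rle_trans; [apply Rmin_r|apply Rmin_r]).
  assert (Hsmall : forall h, 0 < h <= h1 -> C0 * (h * h) <= 1 / 2 /\ h <= 1 /\ h < h0).
  { intros h Hh. split; [|lra].
    assert (C0 * h <= 1 / 2).
    { apply Rle_trans with ((C0 + 1) * (1 / (2 * (C0 + 1)))). apply Rmult_le_compat; lra. right; field; lra. }
    nra. }
  assert (Happ2 : forall h, 0 < h <= h1 -> forall w, Cmod w < eta0 ->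
     Cmod (d h w - RtoC h * b w) <= Cmod (a w) / 2 + h * Cmod (b w) / 2).
  { intros h Hh w Hw. destruct (Hsmall h Hh) as [S1 [S2 S3]].
    eapply Rle_trans; [apply Happ; auto; lra|].
    pose proof (Cmod_ge_0 (a w)). pose proof (Cmod_ge_0 (b w)).
    assert (0 <= C0 * (h * h)) by (apply Rmult_le_pos; nra).
    apply Rle_trans with (1 / 2 * (Cmod (a w) + h * Cmod (b w))). apply Rmult_le_compat_r; nra. lra. }
  destruct (classic (exists h, 0 < h <= h1 /\ DII a (d h))) as [[h [Hh HII]]|Hno].
  - right. intros eps He.
    destruct (HII (Rmin 1 (eps / 4))) as [eta [Heta Hw]]. { apply Rmin_pos; lra. }
    exists (Rmin eta eta0). split; [apply Rmin_pos; auto|]. intros w Hw'.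
    assert (W1 : Cmod w < eta) by (eapply Rlt_le_trans; [exact Hw'|apply Rmin_l]).
    assert (W2 : Cmod w < eta0) by (eapply Rlt_le_trans; [exact Hw'|apply Rmin_r]).
    specialize (Hw w W1). specialize (Happ2 h Hh w W2). destruct (Hsmall h Hh) as [_ [S2 _]].
    pose proof (Cmod_sub_tri (d h w) (RtoC h * b w)%C). rewrite Cmod_mult, Cmod_R, Rabs_pos_eq in H by lra.
    pose proof (Rmin_l 1 (eps / 4)). pose proof (Rmin_r 1 (eps / 4)).
    set (m := Rmin 1 (eps / 4)) in *.
    pose proof (Cmod_ge_0 (a w)). pose proof (Cmod_ge_0 (b w)). pose proof (Cmod_ge_0 (d h w)).
    assert (Hd : Cmod (d h w) <= Cmod (a w) / 2 + 2 * h * Cmod (b w)) by nra.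
    assert (Cmod (a w) <= m * (Cmod (a w) / 2 + 2 * h * Cmod (b w))).
    { eapply Rle_trans; [exact Hw|]. apply Rmult_le_compat_l; [unfold m; left; apply Rmin_pos; lra|auto]. }
    assert (Cmod (a w) <= 4 * m * h * Cmod (b w)).
    { assert (m * (Cmod (a w) / 2) <= Cmod (a w) / 2) by (apply Rle_trans with (1 * (Cmod (a w) / 2)); [apply Rmult_le_compat_r; lra|lra]).
      nra. }
    assert (4 * m * h * Cmod (b w) <= eps * Cmod (b w)).
    { apply Rmult_le_compat_r; auto. nra. }
    lra.
  - assert (HDI : forall h, 0 < h <= h1 -> DI a (d h)).
    { intros h Hh. destruct (Hdich h ltac:(destruct (Hsmall h Hh); lra)) as [A|A]; auto.
      exfalso. apply Hno. exists h; auto. }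
    set (hs := h1 / 2).
    assert (Hhs : 0 < hs <= h1) by (unfold hs; lra).
    destruct (HDI hs Hhs) as [Ls HLs].
    destruct (HLs 1 Rlt_0_1) as [etaK [HetaK HK]].
    set (K := 2 * (Cmod Ls + 2) / hs).
    assert (HK0 : 0 < K) by (unfold K; apply Rdiv_lt_0_compat; [pose proof (Cmod_ge_0 Ls)|]; lra).
    assert (Kb : forall w, Cmod w < Rmin etaK eta0 -> Cmod (b w) <= K * Cmod (a w)).
    { intros w Hw.
      assert (W1 : Cmod w < etaK) by (eapply Rlt_le_trans; [exact Hw|apply Rmin_l]).
      assert (W2 : Cmod w < eta0) by (eapply Rlt_le_trans; [exact Hw|apply Rmin_r]).
      specialize (HK w W1). specialize (Happ2 hs Hhs w W2).
      pose proof (Cmod_sub3 (RtoC hs * b w)%C (d hs w) (Ls * a w)%C).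
      replace (RtoC hs * b w - d hs w)%C with (- (d hs w - RtoC hs * b w))%C in H by ring.
      rewrite Cmod_opp in H.
      pose proof (Cmod_sub_tri (RtoC hs * b w)%C (Ls * a w)%C).
      rewrite !Cmod_mult, Cmod_R, Rabs_pos_eq in H0 by lra.
      assert (hs * Cmod (b w) / 2 <= (Cmod Ls + 2) * Cmod (a w)) by (pose proof (Cmod_ge_0 (a w)); lra).
      unfold K. apply Rmult_le_reg_l with (hs / 2); [lra|].
      replace (hs / 2 * (2 * (Cmod Ls + 2) / hs * Cmod (a w))) with ((Cmod Ls + 2) * Cmod (a w)) by (field; lra).
      lra. }
    set (Q := 1 + C0 + C0 * K).
    assert (HQ : 1 <= Q) by (unfold Q; nra).
    assert (HP : forall h, 0 < h <= h1 -> exists M : C, exists eta, 0 < eta /\ forall w, Cmod w < eta ->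
                 Cmod (b w - M * a w) <= h * Q * Cmod (a w)).
    { intros h Hh. destruct (HDI h Hh) as [L HL]. destruct (HL (h * h)) as [eta [Heta Hw]]; [nra|].
      exists (L / RtoC h)%C, (Rmin eta (Rmin etaK eta0)). split; [repeat apply Rmin_pos; auto|].
      intros w Hw'.
      assert (W1 : Cmod w < eta) by (eapply Rlt_le_trans; [exact Hw'|apply Rmin_l]).
      assert (W2 : Cmod w < Rmin etaK eta0) by (eapply Rlt_le_trans; [exact Hw'|apply Rmin_r]).
      assert (W3 : Cmod w < eta0) by (eapply Rlt_le_trans; [exact W2|apply Rmin_r]).
      specialize (Hw w W1). specialize (Happ h ltac:(destruct (Hsmall h Hh); lra) w W3). specialize (Kb w W2).
      destruct (Hsmall h Hh) as [S1 [S2 S3]].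
      assert (Hhnz : RtoC h <> RtoC 0) by (intro E; injection E; lra).
      replace (b w - L / RtoC h * a w)%C with ((RtoC h * b w - L * a w) / RtoC h)%C by (field; auto).
      rewrite Cmod_div, Cmod_R, Rabs_pos_eq by (auto; lra).
      pose proof (Cmod_sub3 (RtoC h * b w)%C (d h w) (L * a w)%C).
      replace (RtoC h * b w - d h w)%C with (- (d h w - RtoC h * b w))%C in H by ring. rewrite Cmod_opp in H.
      pose proof (Cmod_ge_0 (a w)). pose proof (Cmod_ge_0 (b w)).
      assert (C0 * (h * h) * (Cmod (a w) + h * Cmod (b w)) <= C0 * (h * h) * (Cmod (a w) + h * (K * Cmod (a w)))).
      { apply Rmult_le_compat_l. apply Rmult_le_pos; nra. nra. }
      assert (h * (K * Cmod (a w)) <= K * Cmod (a w)) by (pose proof (Rmult_le_pos _ _ (Rlt_le _ _ HK0) H1); nra).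
      assert (Cmod (RtoC h * b w - L * a w)%C <= h * h * Q * Cmod (a w)).
      { unfold Q. assert (0 <= C0 * (h * h)) by (apply Rmult_le_pos; nra). nra. }
      apply Rmult_le_reg_r with h; [lra|]. unfold Rdiv. rewrite Rmult_assoc, Rinv_l, Rmult_1_r by lra.
      nra. }
    destruct (classic (exists eta, 0 < eta /\ forall w, Cmod w < eta -> a w = RtoC 0)) as [[ea [Hea Ha0]]|Hnz].
    + left. exists (RtoC 0). intros eps He. exists (Rmin ea (Rmin etaK eta0)). split; [repeat apply Rmin_pos; auto|].
      intros w Hw. rewrite Ha0 in * by (eapply Rlt_le_trans; [exact Hw|apply Rmin_l]).
      specialize (Kb w ltac:(eapply Rlt_le_trans; [exact Hw|apply Rmin_r])).
      rewrite Ha0 in Kb by (eapply Rlt_le_trans; [exact Hw|apply Rmin_l]). rewrite Cmod_0 in Kb |- *.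
      assert (b w = RtoC 0) by (apply Cmod_eq_0; pose proof (Cmod_ge_0 (b w)); lra).
      rewrite H. replace (RtoC 0 - RtoC 0 * RtoC 0)%C with (RtoC 0) by ring. rewrite Cmod_0. lra.
    + left.
      set (hn := fun n : nat => h1 / (INR n + 2)).
      assert (Hhn : forall n, 0 < hn n <= h1).
      { intros n. unfold hn. pose proof (pos_INR n). split. apply Rdiv_lt_0_compat; lra.
        apply Rmult_le_reg_r with (INR n + 2); [lra|]. unfold Rdiv. rewrite Rmult_assoc, Rinv_l by lra. nra. }
      assert (Hhn_mono : forall n m, (n <= m)%nat -> hn m <= hn n).
      { intros n m Hnm. unfold hn. apply le_INR in Hnm. unfold Rdiv. apply Rmult_le_compat_l; [lra|].
        apply Rinv_le_contravar; pose proof (pos_INR n); lra. }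
      set (Mx := fun n => proj1_sig (constructive_indefinite_description _ (HP (hn n) (Hhn n)))).
      assert (HMx : forall n, exists eta, 0 < eta /\ forall w, Cmod w < eta -> Cmod (b w - Mx n * a w) <= hn n * Q * Cmod (a w)).
      { intros n. unfold Mx. destruct (constructive_indefinite_description _ _) as [M HM]. simpl. auto. }
      assert (Hcau : forall n m, Cmod (Mx n - Mx m) <= Q * (hn n + hn m)).
      { intros n m. destruct (HMx n) as [e1 [He1 H1]]. destruct (HMx m) as [e2 [He2 H2]].
        apply not_ex_all_not with (n := Rmin e1 e2) in Hnz.
        apply not_and_or in Hnz. destruct Hnz as [Hnz|Hnz]; [exfalso; apply Hnz; apply Rmin_pos; auto|].
        apply not_all_ex_not in Hnz. destruct Hnz as [w Hw]. apply imply_to_and in Hw. destruct Hw as [Hw Haw].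
        specialize (H1 w ltac:(eapply Rlt_le_trans; [exact Hw|apply Rmin_l])).
        specialize (H2 w ltac:(eapply Rlt_le_trans; [exact Hw|apply Rmin_r])).
        assert (Hap : 0 < Cmod (a w)) by (apply Cmod_gt_0; auto).
        pose proof (Cmod_sub3 (Mx n * a w)%C (b w) (Mx m * a w)%C).
        replace (Mx n * a w - b w)%C with (- (b w - Mx n * a w))%C in H by ring. rewrite Cmod_opp in H.
        replace (Mx n * a w - Mx m * a w)%C with ((Mx n - Mx m) * a w)%C in H by ring. rewrite Cmod_mult in H.
        apply Rmult_le_reg_r with (Cmod (a w)); auto. lra. }
      assert (Hcomp : forall (u : nat -> R), (forall n m, Rabs (u n - u m) <= Q * (hn n + hn m)) ->
                { l | Un_cv u l /\ forall n, Rabs (u n - l) <= 2 * Q * hn n }).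
      { intros u Hu.
        assert (Hc : Cauchy_crit u).
        { intros eps He. destruct (archimed (2 * Q * h1 / eps)) as [Ha _].
          destruct (INR_unbounded (2 * Q * h1 / eps)) as [N HN].
          exists N. intros n m Hn Hm. unfold Rdist. eapply Rle_lt_trans; [apply Hu|].
          assert (hn n <= hn N) by (apply Hhn_mono; lia). assert (hn m <= hn N) by (apply Hhn_mono; lia).
          assert (hn N < eps / (2 * Q)).
          { unfold hn. pose proof (pos_INR N).
            assert (0 < 2 * Q * h1 / eps) by (apply Rdiv_lt_0_compat; [nra|lra]).
            apply Rmult_lt_reg_r with (INR N + 2); [lra|]. unfold Rdiv. rewrite Rmult_assoc, Rinv_l by lra.
            apply Rmult_lt_reg_l with (2 * Q / eps). apply Rdiv_lt_0_compat; lra.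
            replace (2 * Q / eps * (h1 * 1)) with (2 * Q * h1 / eps) by (field; lra).
            replace (2 * Q / eps * (eps * / (2 * Q) * (INR N + 2))) with (INR N + 2) by (field; lra). lra. }
          assert (Q * (hn n + hn m) <= Q * (2 * hn N)) by (apply Rmult_le_compat_l; lra).
          assert (Q * (2 * hn N) < eps).
          { apply Rlt_le_trans with (Q * (2 * (eps / (2 * Q)))). apply Rmult_lt_compat_l; lra. right; field; lra. }
          lra. }
        destruct (Rcomplete.R_complete u Hc) as [l Hl]. exists l. split; auto.
        intros n. rewrite Rabs_minus_sym. replace (l - u n) with (- (u n - l)) by ring. rewrite Rabs_Ropp.
        apply (lim_le u l (u n) (2 * Q * hn n) n Hl). intros m Hm.
        eapply Rle_trans; [apply Hu|]. assert (hn m <= hn n) by (apply Hhn_mono; lia). apply Rle_trans with (Q * (2 * hn n)); [apply Rmult_le_compat_l; lra|lra]. }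
      destruct (Hcomp (fun n => Re (Mx n))) as [lr [_ Hlr]].
      { intros n m. eapply Rle_trans; [|apply (Hcau n m)].
        replace (Re (Mx n) - Re (Mx m)) with (Re (Mx n - Mx m)%C) by (unfold Re; simpl; ring). apply Re_le. }
      destruct (Hcomp (fun n => Im (Mx n))) as [li [_ Hli]].
      { intros n m. eapply Rle_trans; [|apply (Hcau n m)].
        replace (Im (Mx n) - Im (Mx m)) with (Im (Mx n - Mx m)%C) by (unfold Im; simpl; ring). apply Im_le. }
      set (L := (lr, li) : C). exists L.
      assert (HML : forall n, Cmod (Mx n - L) <= 4 * Q * hn n).
      { intros n. eapply Rle_trans; [apply Cmod_le_abs|].
        replace (Re (Mx n - L)%C) with (Re (Mx n) - lr) by (unfold Re, L; simpl; ring).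
        replace (Im (Mx n - L)%C) with (Im (Mx n) - li) by (unfold Im, L; simpl; ring).
        specialize (Hlr n). specialize (Hli n). simpl in Hlr, Hli. lra. }
      intros eps He.
      destruct (INR_unbounded (5 * Q * h1 / eps)) as [N HN].
      assert (HhN : 5 * Q * hn N <= eps).
      { unfold hn. pose proof (pos_INR N).
        assert (0 < 5 * Q * h1 / eps) by (apply Rdiv_lt_0_compat; [nra|lra]).
        apply Rmult_le_reg_r with (INR N + 2); [lra|].
        replace (5 * Q * (h1 / (INR N + 2)) * (INR N + 2)) with (5 * Q * h1) by (field; lra).
        apply Rmult_le_reg_l with (/ eps). apply Rinv_0_lt_compat; lra.
        replace (/ eps * (5 * Q * h1)) with (5 * Q * h1 / eps) by (unfold Rdiv; ring).
        replace (/ eps * (eps * (INR N + 2))) with (INR N + 2) by (field; lra). lra. }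
      destruct (HMx N) as [eN [HeN HwN]]. exists eN. split; auto. intros w Hw.
      specialize (HwN w Hw). specialize (HML N).
      pose proof (Cmod_sub3 (b w) (Mx N * a w)%C (L * a w)%C).
      replace (Mx N * a w - L * a w)%C with ((Mx N - L) * a w)%C in H by ring. rewrite Cmod_mult in H.
      pose proof (Cmod_ge_0 (a w)).
      assert (Cmod (Mx N - L) * Cmod (a w) <= 4 * Q * hn N * Cmod (a w)) by (apply Rmult_le_compat_r; auto).
      assert (5 * Q * hn N * Cmod (a w) <= eps * Cmod (a w)) by (apply Rmult_le_compat_r; auto).
      lra.
Qed.

Lemma nuz_bound (z X : C) Cc E : 0 <= Cc -> 0 <= E -> (z = RtoC 0 -> X = RtoC 0) ->
  Cmod (z * X)%C <= Cc * (Cmod z * Cmod z) * E -> Cmod X <= Cc * Cmod z * E.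
Proof.
  intros HC HE Hz H. destruct (classic (z = RtoC 0)) as [E0|E0].
  - rewrite (Hz E0), E0, !Cmod_0. lra.
  - assert (0 < Cmod z) by (apply Cmod_gt_0; auto). rewrite Cmod_mult in H.
    apply Rmult_le_reg_l with (Cmod z); auto. nra.
Qed.

Theorem final_limit (nu nuz : C * C -> C) (Cc rho1 : R) :
  0 < Cc -> 0 < rho1 ->
  (forall z w, Cmod z < rho1 -> Cmod w < rho1 ->
     Cmod (nu (z, w) - nu (RtoC 0, w) - z * nuz (RtoC 0, w))%C <=
        Cc * (Cmod z * Cmod z) * (Cmod (nu (RtoC 0, w)) + Cmod z * Cmod (nuz (RtoC 0, w))) /\
     Cmod (z * (nuz (z, w) - nuz (RtoC 0, w)))%C <=
        Cc * (Cmod z * Cmod z) * (Cmod (nu (RtoC 0, w)) + Cmod z * Cmod (nuz (RtoC 0, w)))) ->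
  DI (fun w => nu (RtoC 0, w)) (fun w => nuz (RtoC 0, w)) \/ DII (fun w => nu (RtoC 0, w)) (fun w => nuz (RtoC 0, w)) ->
  let mu := fun p : C * C => (- (2 * nuz p / nu p))%C in
  let F := within (fun p : C * C => nu p <> RtoC 0) (locally (RtoC 0, RtoC 0)) in
  (exists L : C, filterlim mu F (locally L)) \/
  filterlim (fun p => Cmod (mu p)) F (Rbar_locally p_infty).
Proof.
  intros HC Hr1 Hest Hd mu F.
  destruct Hd as [[L HL] | HII].
  - left. exists (- (2 * L))%C. intros P [eps HP]. unfold filtermap, F, within. apply locally2.
    set (e1 := Rmin 1 (eps / 16)).
    assert (He1 : 0 < e1) by (unfold e1; apply Rmin_pos; [lra|]; pose proof (cond_pos eps); lra).
    destruct (HL e1 He1) as [eta1 [Heta1 Hw1]].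
    set (K1 := Cmod L + 1).
    assert (HK1 : 1 <= K1) by (unfold K1; pose proof (Cmod_ge_0 L); lra).
    set (T := 2 * Cc + Cmod L * K1 + 2 * Cc * Cmod L).
    assert (HT : 0 <= T) by (unfold T; pose proof (Cmod_ge_0 L); nra).
    set (dz := Rmin (Rmin 1 (1 / (4 * K1))) (Rmin (1 / (8 * Cc + 8)) (eps / (16 * (T + 1))))).
    assert (Hdz : 0 < dz).
    { unfold dz. pose proof (cond_pos eps). repeat apply Rmin_pos; try lra; apply Rdiv_lt_0_compat; lra. }
    exists (Rmin (Rmin rho1 eta1) dz). split; [apply Rmin_pos; [apply Rmin_pos|]; auto|].
    intros z w Hz Hw Hnu. apply HP. apply ball_C_of_Cmod.
    pose proof (Rmin_l (Rmin rho1 eta1) dz). pose proof (Rmin_r (Rmin rho1 eta1) dz).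
    pose proof (Rmin_l rho1 eta1). pose proof (Rmin_r rho1 eta1).
    pose proof (Rmin_l (Rmin 1 (1 / (4 * K1))) (Rmin (1 / (8 * Cc + 8)) (eps / (16 * (T + 1))))).
    pose proof (Rmin_r (Rmin 1 (1 / (4 * K1))) (Rmin (1 / (8 * Cc + 8)) (eps / (16 * (T + 1))))).
    pose proof (Rmin_l 1 (1 / (4 * K1))). pose proof (Rmin_r 1 (1 / (4 * K1))).
    pose proof (Rmin_l (1 / (8 * Cc + 8)) (eps / (16 * (T + 1)))). pose proof (Rmin_r (1 / (8 * Cc + 8)) (eps / (16 * (T + 1)))).
    fold dz in H, H0, H3, H4.
    assert (Hz1 : Cmod z < rho1) by lra. assert (Hw1' : Cmod w < rho1) by lra. assert (Hwe : Cmod w < eta1) by lra.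
    assert (Hzd : Cmod z < dz) by lra.
    set (a := nu (RtoC 0, w)) in *. set (b := nuz (RtoC 0, w)) in *.
    destruct (Hest z w Hz1 Hw1') as [E1 E2]. fold a b in E1, E2.
    specialize (Hw1 w Hwe). simpl in Hw1. fold a b in Hw1.
    pose proof (Cmod_ge_0 z) as Pz. pose proof (Cmod_ge_0 a) as Pa. pose proof (Cmod_ge_0 b) as Pb.
    pose proof (Cmod_ge_0 L) as PL.
    assert (He1' : e1 <= 1) by apply Rmin_l. assert (He1'' : e1 <= eps / 16) by apply Rmin_r.
    assert (Hb : Cmod b <= K1 * Cmod a).
    { pose proof (Cmod_sub_tri b (L * a)%C) as Ht. rewrite Cmod_mult in Ht. unfold K1. nra. }
    assert (HzK : Cmod z * K1 <= 1 / 4).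
    { apply Rle_trans with (1 / (4 * K1) * K1). apply Rmult_le_compat_r; lra. right; field; lra. }
    assert (HzC : 2 * Cc * Cmod z <= 1 / 4).
    { apply Rle_trans with (2 * Cc * (1 / (8 * Cc + 8))). apply Rmult_le_compat_l; lra.
      apply Rmult_le_reg_r with (8 * Cc + 8); [lra|]. unfold Rdiv. rewrite Rmult_assoc, (Rmult_assoc 1), Rinv_l by lra. lra. }
    assert (HzT : Cmod z * T <= eps / 16).
    { apply Rle_trans with (eps / (16 * (T + 1)) * (T + 1)). apply Rmult_le_compat; lra.
      right; field; lra. }
    set (E := Cmod a + Cmod z * Cmod b) in *.
    assert (HE : E <= 2 * Cmod a).
    { unfold E. assert (Cmod z * Cmod b <= Cmod z * (K1 * Cmod a)) by (apply Rmult_le_compat_l; lra). nra. }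
    assert (HE0 : 0 <= E) by (unfold E; nra).
    assert (Hva : Cmod (nu (z, w) - a) <= Cmod a / 2).
    { replace (nu (z, w) - a)%C with ((nu (z, w) - a - z * b) + z * b)%C by ring.
      eapply Rle_trans; [apply Cmod_triangle|]. rewrite Cmod_mult.
      assert (Cc * (Cmod z * Cmod z) * E <= Cmod a / 4).
      { assert (Cc * (Cmod z * Cmod z) * E <= Cc * Cmod z * (2 * Cmod a)).
        { replace (Cc * (Cmod z * Cmod z) * E) with (Cc * Cmod z * (Cmod z * E)) by ring.
          apply Rmult_le_compat_l; [nra|]. apply Rle_trans with (1 * E). apply Rmult_le_compat_r; lra. lra. }
        nra. }
      assert (Cmod z * Cmod b <= Cmod a / 4).
      { apply Rle_trans with (Cmod z * (K1 * Cmod a)). apply Rmult_le_compat_l; lra. nra. }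
      lra. }
    assert (Ha0 : a <> RtoC 0).
    { intro Ea. apply Hnu. rewrite Ea, Cmod_0 in Hva. apply Cmod_eq_0. pose proof (Cmod_ge_0 (nu (z, w))).
      replace (nu (z, w) - RtoC 0)%C with (nu (z, w)) in Hva by ring. lra. }
    assert (Hap : 0 < Cmod a) by (apply Cmod_gt_0; auto).
    assert (Hnu_low : Cmod a / 2 <= Cmod (nu (z, w))).
    { pose proof (Cmod_sub_tri a (nu (z, w))) as Ht. replace (a - nu (z, w))%C with (- (nu (z, w) - a))%C in Ht by ring.
      rewrite Cmod_opp in Ht. lra. }
    assert (Hnuz : Cmod (nuz (z, w) - b) <= Cc * Cmod z * E).
    { apply nuz_bound; auto; try lra. intros Ez. rewrite Ez. unfold b. ring. }
    assert (Hnum : Cmod (nuz (z, w) - L * nu (z, w))%C <= (Cmod z * T + e1) * Cmod a).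
    { replace (nuz (z, w) - L * nu (z, w))%C with ((nuz (z, w) - b) + (b - L * a) + - (L * (nu (z, w) - a)))%C by ring.
      eapply Rle_trans; [apply Cmod_tri3|]. rewrite Cmod_opp, Cmod_mult.
      assert (Cmod (nu (z, w) - a) <= (Cmod z * K1 + Cc * Cmod z * 2) * Cmod a).
      { replace (nu (z, w) - a)%C with ((nu (z, w) - a - z * b) + z * b)%C by ring.
        eapply Rle_trans; [apply Cmod_triangle|]. rewrite Cmod_mult.
        assert (Cc * (Cmod z * Cmod z) * E <= Cc * Cmod z * 2 * Cmod a).
        { replace (Cc * (Cmod z * Cmod z) * E) with (Cc * Cmod z * (Cmod z * E)) by ring.
          replace (Cc * Cmod z * 2 * Cmod a) with (Cc * Cmod z * (2 * Cmod a)) by ring.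
          apply Rmult_le_compat_l; [nra|]. apply Rle_trans with (1 * E). apply Rmult_le_compat_r; lra. lra. }
        assert (Cmod z * Cmod b <= Cmod z * K1 * Cmod a) by (rewrite Rmult_assoc; apply Rmult_le_compat_l; lra).
        nra. }
      assert (Cc * Cmod z * E <= Cc * Cmod z * (2 * Cmod a)) by (apply Rmult_le_compat_l; nra).
      assert (Cmod L * Cmod (nu (z, w) - a) <= Cmod L * ((Cmod z * K1 + Cc * Cmod z * 2) * Cmod a)) by (apply Rmult_le_compat_l; lra).
      unfold T. nra. }
    replace (mu (z, w) - - (2 * L))%C with (- (2 * (nuz (z, w) - L * nu (z, w))) / nu (z, w))%C
      by (unfold mu; field; auto).
    rewrite Cmod_div by auto. rewrite Cmod_opp, Cmod_mult.
    replace (Cmod 2) with 2 by (rewrite Cmod_R, Rabs_pos_eq; lra).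
    assert (Hnp : 0 < Cmod (nu (z, w))) by (apply Cmod_gt_0; auto).
    apply Rle_lt_trans with (2 * ((Cmod z * T + e1) * Cmod a) / (Cmod a / 2)).
    { unfold Rdiv. apply Rmult_le_compat. apply Rmult_le_pos; [lra|apply Cmod_ge_0].
      left; apply Rinv_0_lt_compat; auto. apply Rmult_le_compat_l; lra.
      apply Rinv_le_contravar; lra. }
    replace (2 * ((Cmod z * T + e1) * Cmod a) / (Cmod a / 2)) with (4 * (Cmod z * T + e1)) by (field; lra).
    pose proof (cond_pos eps). lra.
  - right. intros P [M HM]. unfold filtermap, F, within. apply locally2.
    set (M1 := Rmax M 1). assert (HM1 : 1 <= M1) by apply Rmax_r. assert (HMM : M <= M1) by apply Rmax_l.
    destruct (HII (1 / (3 * M1))) as [eta1 [Heta1 Hw1]]. { apply Rdiv_lt_0_compat; lra. }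
    set (dz := Rmin (Rmin 1 (1 / (4 * Cc + 1))) (1 / (3 * M1 * (1 + 2 * Cc)))).
    assert (Hdz : 0 < dz) by (unfold dz; repeat apply Rmin_pos; try lra; apply Rdiv_lt_0_compat; nra).
    exists (Rmin (Rmin rho1 eta1) dz). split; [apply Rmin_pos; [apply Rmin_pos|]; auto|].
    intros z w Hz Hw Hnu. apply HM.
    pose proof (Rmin_l (Rmin rho1 eta1) dz). pose proof (Rmin_r (Rmin rho1 eta1) dz).
    pose proof (Rmin_l rho1 eta1). pose proof (Rmin_r rho1 eta1).
    pose proof (Rmin_l (Rmin 1 (1 / (4 * Cc + 1))) (1 / (3 * M1 * (1 + 2 * Cc)))).
    pose proof (Rmin_r (Rmin 1 (1 / (4 * Cc + 1))) (1 / (3 * M1 * (1 + 2 * Cc)))).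
    pose proof (Rmin_l 1 (1 / (4 * Cc + 1))). pose proof (Rmin_r 1 (1 / (4 * Cc + 1))).
    fold dz in H, H0, H3, H4.
    assert (Hz1 : Cmod z < rho1) by lra. assert (Hw1' : Cmod w < rho1) by lra. assert (Hwe : Cmod w < eta1) by lra.
    set (a := nu (RtoC 0, w)) in *. set (b := nuz (RtoC 0, w)) in *.
    destruct (Hest z w Hz1 Hw1') as [E1 E2]. fold a b in E1, E2.
    specialize (Hw1 w Hwe). simpl in Hw1. fold a b in Hw1.
    pose proof (Cmod_ge_0 z) as Pz. pose proof (Cmod_ge_0 a) as Pa. pose proof (Cmod_ge_0 b) as Pb.
    assert (He1 : 1 / (3 * M1) <= 1 / 3).
    { apply Rmult_le_reg_r with (3 * M1); [lra|]. unfold Rdiv. rewrite Rmult_assoc, Rinv_l by lra.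
      rewrite Rmult_assoc. apply Rle_trans with (1 * 1); [lra|]. apply Rmult_le_compat_l; [lra|].
      replace (/ 3 * (3 * M1)) with M1 by (field; lra). lra. }
    set (E := Cmod a + Cmod z * Cmod b) in *.
    assert (HE : E <= 2 * Cmod b).
    { unfold E. assert (Cmod a <= 1 / 3 * Cmod b) by (eapply Rle_trans; [exact Hw1|]; apply Rmult_le_compat_r; lra).
      assert (Cmod z * Cmod b <= 1 * Cmod b) by (apply Rmult_le_compat_r; lra). lra. }
    assert (HE0 : 0 <= E) by (unfold E; nra).
    assert (Hzc : 2 * Cc * Cmod z <= 1 / 2).
    { apply Rle_trans with (2 * Cc * (1 / (4 * Cc + 1))). apply Rmult_le_compat_l; lra.
      replace (2 * Cc * (1 / (4 * Cc + 1))) with (1 / 2 - 1 / (2 * (4 * Cc + 1))) by (field; lra).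
      assert (0 <= 1 / (2 * (4 * Cc + 1))) by (apply Rdiv_le_0_compat; lra). lra. }
    assert (Hnuz : Cmod (nuz (z, w) - b) <= Cc * Cmod z * E).
    { apply nuz_bound; auto; try lra. intros Ez. rewrite Ez. unfold b. ring. }
    assert (Hnuz_low : Cmod b / 2 <= Cmod (nuz (z, w))).
    { pose proof (Cmod_sub_tri b (nuz (z, w))) as Ht. replace (b - nuz (z, w))%C with (- (nuz (z, w) - b))%C in Ht by ring.
      rewrite Cmod_opp in Ht.
      assert (Cc * Cmod z * E <= Cc * Cmod z * (2 * Cmod b)) by (apply Rmult_le_compat_l; nra). nra. }
    assert (Hnu_up : Cmod (nu (z, w)) <= (1 / (3 * M1) + Cmod z * (1 + 2 * Cc)) * Cmod b).
    { replace (nu (z, w)) with ((nu (z, w) - a - z * b) + a + z * b)%C by ring.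
      eapply Rle_trans; [apply Cmod_tri3|]. rewrite Cmod_mult.
      assert (Cc * (Cmod z * Cmod z) * E <= 2 * Cc * Cmod z * Cmod b).
      { replace (Cc * (Cmod z * Cmod z) * E) with (Cc * Cmod z * (Cmod z * E)) by ring.
        replace (2 * Cc * Cmod z * Cmod b) with (Cc * Cmod z * (2 * Cmod b)) by ring.
        apply Rmult_le_compat_l; [nra|]. apply Rle_trans with (1 * E). apply Rmult_le_compat_r; lra. lra. }
      nra. }
    assert (Hb0 : b <> RtoC 0).
    { intro Eb. apply Hnu. rewrite Eb, Cmod_0 in Hnu_up. apply Cmod_eq_0. pose proof (Cmod_ge_0 (nu (z, w))). nra. }
    assert (Hbp : 0 < Cmod b) by (apply Cmod_gt_0; auto).
    assert (Hnp : 0 < Cmod (nu (z, w))) by (apply Cmod_gt_0; auto).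
    assert (Hsm : Cmod z * (1 + 2 * Cc) < 1 / (3 * M1)).
    { apply Rlt_le_trans with (1 / (3 * M1 * (1 + 2 * Cc)) * (1 + 2 * Cc)). apply Rmult_lt_compat_r; lra.
      right; field; lra. }
    assert (Hnu_up2 : Cmod (nu (z, w)) < 2 / (3 * M1) * Cmod b).
    { eapply Rle_lt_trans; [exact Hnu_up|]. apply Rmult_lt_compat_r; auto.
      replace (2 / (3 * M1)) with (1 / (3 * M1) + 1 / (3 * M1)) by (field; lra). lra. }
    unfold mu. rewrite Cmod_opp, Cmod_div by auto. rewrite Cmod_mult.
    replace (Cmod 2) with 2 by (rewrite Cmod_R, Rabs_pos_eq; lra).
    apply Rlt_le_trans with (3 * M1 / 2); [lra|].
    apply Rle_trans with (Cmod b / Cmod (nu (z, w))).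
    + assert (3 * M1 / 2 * Cmod (nu (z, w)) <= Cmod b).
      { apply Rle_trans with (3 * M1 / 2 * (2 / (3 * M1) * Cmod b)). apply Rmult_le_compat_l; lra.
        right; field; lra. }
      replace (3 * M1 / 2) with (3 * M1 / 2 * Cmod (nu (z, w)) / Cmod (nu (z, w))) by (field; lra).
      unfold Rdiv at 1 3. apply Rmult_le_compat_r; [left; apply Rinv_0_lt_compat; auto|]. auto.
    + unfold Rdiv. apply Rmult_le_compat_r. left; apply Rinv_0_lt_compat; auto. lra.
Qed.

Theorem lemma2p12 (D : C -> Prop) (nu s nuz nuzz : C * C -> C) :
  open D -> contractible D -> D (RtoC 0) ->
  holomorphic2 D D nu -> holomorphic2 D D s ->
  (forall p : C * C, D (fst p) -> D (snd p) -> is_partial_z nu p (nuz p)) ->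
  (forall p : C * C, D (fst p) -> D (snd p) -> is_partial_z nuz p (nuzz p)) ->
  (forall p : C * C, D (fst p) -> D (snd p) ->
     (nuzz p + s p / 2 * nu p)%C = RtoC 0) ->
  nu (RtoC 0, RtoC 0) = RtoC 0 ->
  (exists p : C * C, D (fst p) /\ D (snd p) /\ nu p <> RtoC 0) ->
  let mu := fun p : C * C => (- (2 * nuz p / nu p))%C in
  let F := within (fun p : C * C => nu p <> RtoC 0) (locally (RtoC 0, RtoC 0)) in
  (exists L : C, filterlim mu F (locally L)) \/
  filterlim (fun p => Cmod (mu p)) F (Rbar_locally p_infty).
Proof.
  intros Hopen _ HD0 Hnu Hs Hpz Hpzz Hode _ _.
  destruct (open_ball D Hopen HD0) as [r0 [Hr0 HDr]].
  destruct (holo_bound D s Hs HD0) as [d1 [S0 [Hd1 HS0]]].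
  set (S := Rmax S0 0). assert (HS : 0 <= S) by apply Rmax_r.
  set (r := Rmin r0 d1). assert (Hr : 0 < r) by (apply Rmin_pos; auto).
  assert (Hrr0 : r <= r0) by apply Rmin_l. assert (Hrd1 : r <= d1) by apply Rmin_r.
  assert (HDu : forall u, Cmod u < r -> D u) by (intros; apply HDr; lra).
  set (Cc := 4 * S + 1). assert (HCc : 0 < Cc) by (unfold Cc; lra).
  set (rho1 := Rmin r (Rmin 1 (1 / (4 * S + 4)))).
  assert (Hrho1 : 0 < rho1) by (unfold rho1; repeat apply Rmin_pos; try lra; apply Rdiv_lt_0_compat; lra).
  assert (Hrho1a : rho1 <= r) by apply Rmin_l.
  assert (Hrho1b : rho1 <= 1) by (eapply Rle_trans; [apply Rmin_r|apply Rmin_l]).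
  assert (Hrho1c : rho1 <= 1 / (4 * S + 4)) by (eapply Rle_trans; [apply Rmin_r|apply Rmin_r]).
  assert (Hest : forall z w, Cmod z < rho1 -> Cmod w < rho1 ->
     Cmod (nu (z, w) - nu (RtoC 0, w) - z * nuz (RtoC 0, w))%C <=
        Cc * (Cmod z * Cmod z) * (Cmod (nu (RtoC 0, w)) + Cmod z * Cmod (nuz (RtoC 0, w))) /\
     Cmod (z * (nuz (z, w) - nuz (RtoC 0, w)))%C <=
        Cc * (Cmod z * Cmod z) * (Cmod (nu (RtoC 0, w)) + Cmod z * Cmod (nuz (RtoC 0, w)))).
  { intros z w Hz Hw.
    assert (Hwr : Cmod w < r) by lra.
    assert (Hsm : 2 * S * (Cmod z * Cmod z) <= 1 / 2).
    { pose proof (Cmod_ge_0 z).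
      assert (Cmod z * Cmod z <= Cmod z) by nra.
      assert (2 * S * Cmod z <= 1 / 2).
      { apply Rle_trans with (2 * S * (1 / (4 * S + 4))). apply Rmult_le_compat_l; lra.
        replace (2 * S * (1 / (4 * S + 4))) with (1 / 2 - 1 / (2 * (S + 1))) by (field; lra).
        assert (0 <= 1 / (2 * (S + 1))) by (apply Rdiv_le_0_compat; lra). lra. }
      nra. }
    destruct (ode_est nu s nuz nuzz r S w z Hr HS) as [E1 E2].
    - intros u Hu. apply partial_CD. apply (Hpz (u, w)); simpl; apply HDu; auto.
    - intros u Hu. apply partial_CD. apply (Hpzz (u, w)); simpl; apply HDu; auto.
    - intros u Hu. apply sub_eq0. rewrite <- (Hode (u, w)) by (simpl; apply HDu; auto). ring.
    - intros u Hu. eapply Rle_trans; [apply HS0; lra|apply Rmax_l].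
    - lra.
    - auto.
    - pose proof (Cmod_ge_0 z). pose proof (Cmod_ge_0 (nu (RtoC 0, w))). pose proof (Cmod_ge_0 (nuz (RtoC 0, w))).
      set (E := Cmod (nu (RtoC 0, w)) + Cmod z * Cmod (nuz (RtoC 0, w))) in *.
      assert (0 <= E) by (unfold E; nra).
      assert (0 <= (Cmod z * Cmod z) * E) by (apply Rmult_le_pos; nra).
      split.
      + eapply Rle_trans; [exact E1|].
        replace (4 * S * (Cmod z * Cmod z) * E) with ((4 * S) * ((Cmod z * Cmod z) * E)) by ring.
        replace (Cc * (Cmod z * Cmod z) * E) with (Cc * ((Cmod z * Cmod z) * E)) by ring.
        apply Rmult_le_compat_r; auto. unfold Cc; lra.
      + eapply Rle_trans; [exact E2|].
        replace (2 * S * (Cmod z * Cmod z) * E) with ((2 * S) * ((Cmod z * Cmod z) * E)) by ring.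
        replace (Cc * (Cmod z * Cmod z) * E) with (Cc * ((Cmod z * Cmod z) * E)) by ring.
        apply Rmult_le_compat_r; auto. unfold Cc; lra. }
  apply (final_limit nu nuz Cc rho1 HCc Hrho1 Hest).
  apply (htrick (fun w => nu (RtoC 0, w)) (fun w => nuz (RtoC 0, w))
           (fun h w => nu (RtoC h, w) - nu (RtoC 0, w))%C Cc rho1 rho1); try lra.
  - intros h Hh w Hw. destruct (Hest (RtoC h) w) as [E1 _]; auto.
    { rewrite Cmod_R, Rabs_pos_eq; lra. }
    rewrite Cmod_R, Rabs_pos_eq in E1 by lra. exact E1.
  - intros h Hh. apply (pair_dich _ _ rho1 Hrho1).
    + intros z Hz. apply (holo_w D nu); auto. apply HDu; lra.
    + intros z Hz. apply CDex_minus; apply (holo_w D nu); auto; try (apply HDu; lra).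
      apply HDu. rewrite Cmod_R, Rabs_pos_eq; lra.
Qed.
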